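(* Let $\theta\in(0,2\pi)$. Then for all $x,y\in S_\theta$: (1) $j^*_{S_\theta}(x,y)\le p_{S_\theta}(x,y)\le\sqrt2\, j^*_{S_\theta}(x,y)$ for every $\theta\in(0,2\pi)$; (2) $j^*_{S_\theta}(x,y)\le s_{S_\theta}(x,y)\le\sqrt2\, j^*_{S_\theta}(x,y)$ if $\theta\in(0,\pi]$; (3) $j^*_{S_\theta}(x,y)\le s_{S_\theta}(x,y)\le 2\sin(\theta/4)\, j^*_{S_\theta}(x,y)$ if $\theta\in(\pi,2\pi)$; (4) $(\sqrt2\cos(\theta/4))^{-1}p_{S_\theta}(x,y)\le s_{S_\theta}(x,y)\le p_{S_\theta}(x,y)$ if $\theta\in(0,\pi]$; (5) $p_{S_\theta}(x,y)\le s_{S_\theta}(x,y)\le \sqrt2\sin(\theta/4)\, p_{S_\theta}(x,y)$ if $\theta\in(\pi,2\pi)$. Furthermore, the constants are sharp (best possible) in each case.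
   Context: For $\theta\in(0,2\pi)$, $S_\theta=\{x\in\mathbb{C}:0<\arg(x)<\theta\}$. For a domain $G\subsetneq\mathbb{C}$ and $x\in G$, $d_G(x)=\inf\{|x-z|: z\in\partial G\}$. Define $s_G(x,y)=\frac{|x-y|}{\inf_{z\in\partial G}(|x-z|+|z-y|)}$ (triangular ratio metric), $j^*_G(x,y)=\frac{|x-y|}{|x-y|+2\min\{d_G(x),d_G(y)\}}$, and $p_G(x,y)=\frac{|x-y|}{\sqrt{|x-y|^2+4d_G(x)d_G(y)}}$ (point pair function). *)

(* Defs.v *)
From Stdlib Require Import Reals.
From Coquelicot Require Import Coquelicot.
Open Scope R_scope.

Definition sector (theta : R) (x : C) : Prop :=
  exists r phi : R, 0 < r /\ 0 < phi < theta /\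
    x = (r * cos phi, r * sin phi).

Definition boundary (G : C -> Prop) (z : C) : Prop :=
  forall eps : R, 0 < eps ->
    (exists w, G w /\ Cmod (Cminus w z) < eps) /\
    (exists w, ~ G w /\ Cmod (Cminus w z) < eps).

Definition dG (G : C -> Prop) (x : C) : R :=
  real (Glb_Rbar (fun t => exists z, boundary G z /\ t = Cmod (Cminus x z))).

Definition sG (G : C -> Prop) (x y : C) : R :=
  Cmod (Cminus x y) /
  real (Glb_Rbar (fun t => exists z, boundary G z /\
                    t = Cmod (Cminus x z) + Cmod (Cminus z y))).

Definition jstar (G : C -> Prop) (x y : C) : R :=
  Cmod (Cminus x y) / (Cmod (Cminus x y) + 2 * Rmin (dG G x) (dG G y)).

Definition pG (G : C -> Prop) (x y : C) : R :=
  Cmod (Cminus x y) /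
  sqrt (Cmod (Cminus x y) ^ 2 + 4 * dG G x * dG G y).

Definition sharp_lower (G : C -> Prop) (L : R) (A B : C -> C -> R) : Prop :=
  forall c, L < c -> exists x y, G x /\ G y /\ B x y < c * A x y.
Definition sharp_upper (G : C -> Prop) (U : R) (A B : C -> C -> R) : Prop :=
  forall c, c < U -> exists x y, G x /\ G y /\ c * A x y < B x y.

(* Main.v *)
Require Import Defs.
From Stdlib Require Import Reals Lra Psatz Classical.
From Coquelicot Require Import Coquelicot.
Open Scope R_scope.


Definition dst (x y : C) : R := Cmod (Cminus x y).

Lemma dst_eq x y : dst x y = sqrt ((fst x - fst y)^2 + (snd x - snd y)^2).
Proof. destruct x as [x1 x2], y as [y1 y2]. unfold dst, Cmod, Cminus, Cplus, Copp. simpl. f_equal; try ring. Qed.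

Lemma dst_ge0 x y : 0 <= dst x y.
Proof. rewrite dst_eq. apply sqrt_pos. Qed.

Lemma dst_sym x y : dst x y = dst y x.
Proof. rewrite !dst_eq. f_equal. ring. Qed.

Lemma dst_tri x y z : dst x z <= dst x y + dst y z.
Proof.
  unfold dst. replace (Cminus x z) with (Cplus (Cminus x y) (Cminus y z)).
  apply Cmod_triangle.
  destruct x, y, z. unfold Cminus, Cplus, Copp. simpl. f_equal; ring.
Qed.

Lemma dst_self x : dst x x = 0.
Proof. rewrite dst_eq. replace ((fst x - fst x) ^ 2 + (snd x - snd x) ^ 2) with 0 by ring. apply sqrt_0. Qed.

Lemma glb_props (P : C -> Prop) (f : C -> R) :
  (exists z, P z) -> (forall z, P z -> 0 <= f z) ->
  0 <= real (Glb_Rbar (fun t => exists z, P z /\ t = f z)) /\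
  (forall z, P z -> real (Glb_Rbar (fun t => exists z, P z /\ t = f z)) <= f z) /\
  (forall L, (forall z, P z -> L <= f z) -> L <= real (Glb_Rbar (fun t => exists z, P z /\ t = f z))).
Proof.
  intros [z0 Hz0] Hpos.
  set (E := fun t => exists z, P z /\ t = f z).
  destruct (Glb_Rbar_correct E) as [Hlb Hglb].
  destruct (Glb_Rbar E) as [r| |] eqn:Hg.
  - simpl. split; [|split].
    + assert (H0 : Rbar_le 0 r). { apply Hglb. intros t [z [Hz ->]]. simpl. apply Hpos; auto. }
      exact H0.
    + intros z Hz. assert (H1 : Rbar_le r (f z)) by (apply Hlb; exists z; auto). exact H1.
    + intros L HL. assert (H0 : Rbar_le L r). { apply Hglb. intros t [z [Hz ->]]. simpl. apply HL; auto. }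
      exact H0.
  - exfalso. assert (H1 : Rbar_le p_infty (f z0)) by (apply Hlb; exists z0; auto). exact H1.
  - exfalso. assert (H0 : Rbar_le 0 m_infty). { apply Hglb. intros t [z [Hz ->]]. simpl. apply Hpos; auto. }
    exact H0.
Qed.

Lemma dst_fold a b : Cmod (Cminus a b) = dst a b.
Proof. reflexivity. Qed.


Definition pt (x w : C) (u : R) : C := (fst x + u * (fst w - fst x), snd x + u * (snd w - snd x)).

Lemma dst_pt x w a b : dst (pt x w a) (pt x w b) = Rabs (a - b) * dst x w.
Proof.
  rewrite !dst_eq. unfold pt; simpl.
  rewrite <- sqrt_Rsqr_abs. rewrite <- sqrt_mult; [| apply Rle_0_sqr | apply Rplus_le_le_0_compat; apply pow2_ge_0].
  f_equal. unfold Rsqr. ring.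
Qed.

Lemma pt0 x w : pt x w 0 = x.
Proof. destruct x; unfold pt; simpl; f_equal; ring. Qed.
Lemma pt1 x w : pt x w 1 = w.
Proof. destruct x, w; unfold pt; simpl; f_equal; ring. Qed.

Lemma seg_boundary (G : C -> Prop) x w : G x -> ~ G w ->
  exists z, boundary G z /\ dst x z + dst z w = dst x w.
Proof.
  intros Gx Gw.
  set (E := fun u => 0 <= u <= 1 /\ forall v, 0 <= v <= u -> G (pt x w v)).
  assert (Hb : bound E). { exists 1. intros u [Hu _]. lra. }
  assert (He : exists u, E u). { exists 0. split; [lra|]. intros v Hv. replace v with 0 by lra. rewrite pt0. auto. }
  destruct (completeness E Hb He) as [m [Hub Hlub]].
  assert (Hm0 : 0 <= m). { apply Hub. split; [lra|]. intros v Hv. replace v with 0 by lra. rewrite pt0. auto. }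
  assert (Hm1 : m <= 1). { apply Hlub. intros u [Hu _]. lra. }
  assert (F1 : forall v, 0 <= v < m -> G (pt x w v)).
  { intros v Hv. destruct (classic (exists u, E u /\ v < u)) as [[u [[Hu Hu2] Hvu]]|Hn].
    - apply Hu2. lra.
    - exfalso. assert (m <= v). { apply Hlub. intros u Hu. destruct (Rle_dec u v); auto. exfalso; apply Hn; exists u; split; auto; lra. } lra. }
  set (L := dst x w). assert (HL : 0 <= L) by apply dst_ge0.
  exists (pt x w m). split.
  - intros eps Heps. split.
    + destruct (Rle_lt_dec m 0) as [Hm|Hm].
      * exists x. split; auto. rewrite dst_fold. replace m with 0 by lra. rewrite pt0, dst_self. lra.
      * set (d := Rmin m (eps / (L + 1)) / 2).
        assert (Hd0 : 0 < d). { unfold d. apply Rdiv_lt_0_compat; [|lra]. apply Rmin_pos; auto. apply Rdiv_lt_0_compat; lra. }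
        assert (Hd1 : d <= m / 2). { unfold d. pose proof (Rmin_l m (eps/(L+1))). lra. }
        assert (Hd2 : d <= eps / (L + 1) / 2). { unfold d. pose proof (Rmin_r m (eps/(L+1))). lra. }
        exists (pt x w (m - d)). split. { apply F1. lra. }
        rewrite dst_fold, dst_pt. fold L.
        replace (Rabs (m - d - m)) with d by (rewrite Rabs_left by lra; lra).
        assert (d * (L + 1) <= eps / 2).
        { apply Rmult_le_compat_r with (r := L + 1) in Hd2; [|lra].
          replace (eps / (L + 1) / 2 * (L + 1)) with (eps / 2) in Hd2 by (field; lra). lra. }
        nra.
    + apply NNPP. intros Hn.
      assert (HG : forall w', dst w' (pt x w m) < eps -> G w').
      { intros w' Hw'. apply NNPP. intros Hng. apply Hn. exists w'. split; auto. }
      set (d := eps / (L + 1) / 2).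
      assert (Hd0 : 0 < d) by (unfold d; apply Rdiv_lt_0_compat; [apply Rdiv_lt_0_compat|]; lra).
      assert (Hdl : d * L < eps).
      { assert (d * (L + 1) = eps / 2) by (unfold d; field; lra). nra. }
      assert (HE : E (Rmin 1 (m + d))).
      { split. { split. pose proof (Rmin_glb 0 1 (m+d)). apply Rmin_glb; lra. apply Rmin_l. }
        intros v Hv. destruct (Rlt_le_dec v m) as [Hvm|Hvm]. { apply F1. lra. }
        apply HG. rewrite dst_pt. fold L. pose proof (Rmin_r 1 (m + d)).
        rewrite Rabs_right by lra. nra. }
      assert (Hle : Rmin 1 (m + d) <= m) by (apply Hub; auto).
      assert (m = 1). { unfold Rmin in Hle. destruct (Rle_dec 1 (m + d)); lra. }
      apply Gw. apply HG. rewrite H, pt1, dst_self. lra.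
  - replace (dst x (pt x w m)) with (dst (pt x w 0) (pt x w m)) by (rewrite pt0; auto).
    replace (dst (pt x w m) w) with (dst (pt x w m) (pt x w 1)) by (rewrite pt1; auto).
    replace (dst x w) with (dst (pt x w 0) (pt x w 1)) by (rewrite pt0, pt1; auto).
    rewrite !dst_pt. rewrite (Rabs_left1 (0 - m)) by lra. rewrite Rabs_left1 by lra.
    unfold L; ring.
Qed.


Definition Dn (G : C -> Prop) (x y : C) : R :=
  real (Glb_Rbar (fun t => exists z, boundary G z /\ t = Cmod (Cminus x z) + Cmod (Cminus z y))).

Lemma sG_eq G x y : sG G x y = dst x y / Dn G x y.
Proof. reflexivity. Qed.

Lemma bd_ne G x w : G x -> ~ G w -> exists z, boundary G z.
Proof. intros H1 H2. destruct (seg_boundary G x w H1 H2) as [z [Hz _]]. eauto. Qed.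

Lemma dG_props G x : (exists z, boundary G z) ->
  0 <= dG G x /\ (forall z, boundary G z -> dG G x <= dst x z) /\
  (forall L, (forall z, boundary G z -> L <= dst x z) -> L <= dG G x).
Proof.
  intros Hne. pose proof (glb_props (boundary G) (fun z => Cmod (Cminus x z)) Hne) as H.
  cbv beta in H. unfold dG. apply H. intros; apply dst_ge0.
Qed.

Lemma Dn_props G x y : (exists z, boundary G z) ->
  0 <= Dn G x y /\ (forall z, boundary G z -> Dn G x y <= dst x z + dst z y) /\
  (forall L, (forall z, boundary G z -> L <= dst x z + dst z y) -> L <= Dn G x y).
Proof.
  intros Hne. pose proof (glb_props (boundary G) (fun z => Cmod (Cminus x z) + Cmod (Cminus z y)) Hne) as H.
  cbv beta in H. unfold Dn. apply H. intros. pose proof (dst_ge0 x z). pose proof (dst_ge0 z y).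
  unfold dst in *. lra.
Qed.

Lemma dG_le G x w : G x -> ~ G w -> dG G x <= dst x w.
Proof.
  intros H1 H2. destruct (seg_boundary G x w H1 H2) as [z [Hz Hd]].
  destruct (dG_props G x (ex_intro _ z Hz)) as [_ [Hle _]].
  pose proof (Hle z Hz). pose proof (dst_ge0 z w). lra.
Qed.

Lemma dG_ge0 G x : (exists z, boundary G z) -> 0 <= dG G x.
Proof. intros H. apply (proj1 (dG_props G x H)). Qed.

Lemma dG_lb G x L : (exists z, boundary G z) -> (forall z, boundary G z -> L <= dst x z) -> L <= dG G x.
Proof. intros H. apply (proj2 (proj2 (dG_props G x H))). Qed.

Lemma dG_lip G x y : (exists z, boundary G z) -> dG G x <= dst x y + dG G y.
Proof.
  intros H. assert (dG G x - dst x y <= dG G y); [|lra].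
  apply dG_lb; auto. intros z Hz. destruct (dG_props G x H) as [_ [Hle _]].
  pose proof (Hle z Hz). pose proof (dst_tri x y z). lra.
Qed.

Lemma Dn_le G x y w : G x -> ~ G w -> Dn G x y <= dst x w + dst w y.
Proof.
  intros H1 H2. destruct (seg_boundary G x w H1 H2) as [z [Hz Hd]].
  destruct (Dn_props G x y (ex_intro _ z Hz)) as [_ [Hle _]].
  pose proof (Hle z Hz). pose proof (dst_tri z w y). lra.
Qed.

Lemma Dn_lb G x y L : (exists z, boundary G z) -> (forall z, boundary G z -> L <= dst x z + dst z y) -> L <= Dn G x y.
Proof. intros H. apply (proj2 (proj2 (Dn_props G x y H))). Qed.

Lemma Dn_ge_t G x y : (exists z, boundary G z) -> dst x y <= Dn G x y.
Proof. intros H. apply Dn_lb; auto. intros z _. apply dst_tri. Qed.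

Lemma Dn_ge_d G x y : (exists z, boundary G z) -> dG G x + dG G y <= Dn G x y.
Proof.
  intros H. apply Dn_lb; auto. intros z Hz.
  destruct (dG_props G x H) as [_ [Hx _]]. destruct (dG_props G y H) as [_ [Hy _]].
  pose proof (Hx z Hz). pose proof (Hy z Hz). rewrite (dst_sym z y). lra.
Qed.

Lemma Dn_le_t2d G x y : (exists z, boundary G z) -> Dn G x y <= dst x y + 2 * dG G x.
Proof.
  intros H. assert ((Dn G x y - dst x y) / 2 <= dG G x); [|lra].
  apply dG_lb; auto. intros z Hz. destruct (Dn_props G x y H) as [_ [Hle _]].
  pose proof (Hle z Hz). pose proof (dst_tri z x y). rewrite (dst_sym z x) in *. lra.
Qed.


Lemma sqrt_le_sq a c : 0 <= c -> a <= c ^ 2 -> sqrt a <= c.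
Proof. intros Hc H. rewrite <- (sqrt_pow2 c Hc). apply sqrt_le_1_alt. exact H. Qed.

Lemma sq_le_sqrt a c : 0 <= c -> c ^ 2 <= a -> c <= sqrt a.
Proof. intros Hc H. rewrite <- (sqrt_pow2 c Hc). apply sqrt_le_1_alt. exact H. Qed.

Lemma sqrt_sq_eq a c : 0 <= c -> a = c ^ 2 -> sqrt a = c.
Proof. intros Hc ->. apply sqrt_pow2. exact Hc. Qed.

Lemma div_cmp t a b k : 0 <= t -> 0 < a -> 0 < b -> b <= k * a -> t / a <= k * (t / b).
Proof.
  intros Ht Ha Hb H. unfold Rdiv.
  assert (k * / b - / a = (k * a - b) / (a * b)) by (field; lra).
  assert (0 <= (k * a - b) / (a * b)) by (apply Rdiv_le_0_compat; nra).
  assert (/ a <= k * / b) by lra. nra.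
Qed.

Lemma div_cmp' t a b k : 0 <= t -> 0 < a -> 0 < b -> k * b <= a -> k * (t / a) <= t / b.
Proof.
  intros Ht Ha Hb H. unfold Rdiv.
  assert (/ b - k * / a = (a - k * b) / (a * b)) by (field; lra).
  assert (0 <= (a - k * b) / (a * b)) by (apply Rdiv_le_0_compat; nra).
  assert (k * / a <= / b) by lra. nra.
Qed.

Lemma sqrt2_sq : sqrt 2 * sqrt 2 = 2.
Proof. apply sqrt_sqrt. lra. Qed.

Lemma sqrt2_pos : 0 < sqrt 2.
Proof. apply sqrt_lt_R0. lra. Qed.

Lemma ratio_jp t a b : 0 <= t -> 0 < a -> 0 < b -> b <= a + t -> a <= b + t ->
  t / (t + 2 * Rmin a b) <= t / sqrt (t ^ 2 + 4 * a * b) /\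
  t / sqrt (t ^ 2 + 4 * a * b) <= sqrt 2 * (t / (t + 2 * Rmin a b)).
Proof.
  intros Ht Ha Hb H1 H2.
  assert (Hm : 0 < Rmin a b) by (apply Rmin_pos; auto).
  assert (Hma : Rmin a b <= a) by apply Rmin_l. assert (Hmb : Rmin a b <= b) by apply Rmin_r.
  assert (Hab : Rmin a b = a \/ Rmin a b = b) by (unfold Rmin; destruct (Rle_dec a b); auto).
  assert (Hs : 0 < sqrt (t ^ 2 + 4 * a * b)) by (apply sqrt_lt_R0; nra).
  split.
  - replace (t / sqrt (t ^ 2 + 4 * a * b)) with (1 * (t / sqrt (t ^ 2 + 4 * a * b))) by ring.
    apply div_cmp; try lra. rewrite Rmult_1_l. apply sqrt_le_sq; [lra|].
    destruct Hab as [-> | ->]; nra.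
  - apply div_cmp; try lra.
    assert (t + 2 * Rmin a b <= sqrt 2 * sqrt (t ^ 2 + 4 * a * b)); [|lra].
    rewrite <- sqrt_mult by (lra || nra). apply sq_le_sqrt; [lra|].
    assert (Rmin a b * Rmin a b <= a * b) by nra. pose proof (pow2_ge_0 (t - 2 * Rmin a b)). nra.
Qed.


Definition Av (z : C) : R := snd z.
Definition Bv (th : R) (z : C) : R := fst z * sin th - snd z * cos th.

Lemma Bv_polar th r phi : Bv th (r * cos phi, r * sin phi) = r * sin (th - phi).
Proof. unfold Bv; simpl. rewrite sin_minus. ring. Qed.

Lemma sec_fwd th z : 0 < th < 2 * PI -> sector th z ->
  (th <= PI -> Av z > 0 /\ Bv th z > 0) /\ (PI < th -> Av z > 0 \/ Bv th z > 0).
Proof.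
  intros Hth [r [phi [Hr [Hphi ->]]]]. rewrite Bv_polar. unfold Av; simpl.
  split.
  - intros Hle. split.
    + apply Rmult_lt_0_compat; auto. apply sin_gt_0; lra.
    + apply Rmult_lt_0_compat; auto. apply sin_gt_0; lra.
  - intros Hgt. destruct (Rlt_le_dec phi PI).
    + left. apply Rmult_lt_0_compat; auto. apply sin_gt_0; lra.
    + right. apply Rmult_lt_0_compat; auto. apply sin_gt_0; lra.
Qed.



Lemma polar_up z : 0 < snd z -> exists r a, 0 < r /\ 0 < a < PI /\ z = (r * cos a, r * sin a).
Proof.
  destruct z as [z1 z2]; simpl. intros H2.
  set (r := sqrt (z1 ^ 2 + z2 ^ 2)).
  assert (Hr : 0 < r) by (apply sqrt_lt_R0; nra).
  assert (Hr2 : r * r = z1 ^ 2 + z2 ^ 2) by (apply sqrt_sqrt; nra).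
  assert (Hc : -1 <= z1 / r <= 1).
  { assert (-r <= z1 <= r) by (split; nra).
    split; apply (Rmult_le_reg_r r); auto; unfold Rdiv; rewrite Rmult_assoc, Rinv_l by lra; lra. }
  exists r, (acos (z1 / r)). split; auto.
  assert (Hs : sin (acos (z1 / r)) = z2 / r).
  { rewrite sin_acos by auto. apply sqrt_sq_eq. { apply Rdiv_le_0_compat; lra. }
    unfold Rsqr. replace (1 - z1 / r * (z1 / r)) with ((r * r - z1 * z1) / (r * r)) by (field; lra).
    replace ((z2 / r) ^ 2) with (z2 ^ 2 / (r * r)) by (field; lra). rewrite Hr2. field. nra. }
  split.
  - pose proof (acos_bound (z1 / r)). split.
    + destruct (Req_dec (acos (z1 / r)) 0) as [E|E]; [|lra].
      rewrite E, sin_0 in Hs. assert (z2 = 0); [|lra].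
      apply Rmult_eq_reg_r with (/ r). lra. apply Rinv_neq_0_compat; lra.
    + destruct (Req_dec (acos (z1 / r)) PI) as [E|E]; [|lra].
      rewrite E, sin_PI in Hs. assert (z2 = 0); [|lra].
      apply Rmult_eq_reg_r with (/ r). lra. apply Rinv_neq_0_compat; lra.
  - rewrite cos_acos, Hs by auto. f_equal; field; lra.
Qed.

Lemma polar_down z : snd z <= 0 -> z <> (0, 0) ->
  exists r a, 0 < r /\ PI <= a <= 2 * PI /\ z = (r * cos a, r * sin a).
Proof.
  destruct z as [z1 z2]; simpl. intros H2 Hnz.
  destruct (Rlt_le_dec z2 0) as [Hlt|Hge].
  - destruct (polar_up (- z1, - z2)) as [r [b [Hr [Hb E]]]]; simpl; [lra|].
    injection E as E1 E2. exists r, (b + PI). split; auto. split; [lra|].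
    rewrite neg_cos, neg_sin. f_equal; [replace (r * - cos b) with (- (r * cos b)) by ring | replace (r * - sin b) with (- (r * sin b)) by ring]; lra.
  - assert (z2 = 0) by lra. subst z2.
    destruct (Rlt_le_dec z1 0).
    + exists (- z1), PI. split; [lra|]. split; [pose proof PI_RGT_0; lra|]. rewrite cos_PI, sin_PI. f_equal; ring.
    + destruct (Req_dec z1 0). { subst. contradiction. }
      exists z1, (2 * PI). split; [lra|]. split; [pose proof PI_RGT_0; lra|].
      rewrite cos_2PI, sin_2PI. f_equal; ring.
Qed.

Lemma sin_nonpos_range x : - PI <= x <= 0 -> sin x <= 0.
Proof. intros H. rewrite <- (Ropp_involutive x), sin_neg. pose proof (sin_ge_0 (- x)). lra. Qed.

Lemma sec_bwd_le th z : 0 < th <= PI -> Av z > 0 -> Bv th z > 0 -> sector th z.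
Proof.
  intros Hth HA HB. unfold Av in HA.
  destruct (polar_up z HA) as [r [a [Hr [Ha E]]]]. rewrite E in HB. rewrite Bv_polar in HB.
  exists r, a. repeat split; auto; try lra.
  destruct (Rlt_le_dec a th) as [|Hge]; auto.
  pose proof (sin_nonpos_range (th - a)). assert (sin (th - a) <= 0) by (apply H; lra). nra.
Qed.

Lemma sec_bwd_gt th z : PI < th < 2 * PI -> Av z > 0 \/ Bv th z > 0 -> sector th z.
Proof.
  intros Hth H. unfold Av in H.
  destruct (Rlt_le_dec 0 (snd z)) as [Hup|Hdn].
  - destruct (polar_up z Hup) as [r [a [Hr [Ha E]]]]. exists r, a. repeat split; auto; lra.
  - destruct H as [H|H]; [lra|].
    assert (Hnz : z <> (0,0)). { intros ->. unfold Bv in H; simpl in H. lra. }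
    destruct (polar_down z Hdn Hnz) as [r [a [Hr [Ha E]]]]. rewrite E, Bv_polar in H.
    exists r, a. repeat split; auto; try (pose proof PI_RGT_0; lra).
    destruct (Rlt_le_dec a th) as [|Hge]; auto.
    assert (sin (th - a) <= 0) by (apply sin_nonpos_range; lra). nra.
Qed.


Definition Lf (n1 n2 : R) (v : C) : R := n1 * fst v + n2 * snd v.

Lemma Lf_lip n1 n2 w z : n1 ^ 2 + n2 ^ 2 = 1 -> Rabs (Lf n1 n2 w - Lf n1 n2 z) <= dst w z.
Proof.
  intros Hn. rewrite dst_eq. rewrite <- sqrt_Rsqr_abs. apply sqrt_le_1_alt. unfold Lf, Rsqr.
  set (a := fst w - fst z). set (b := snd w - snd z).
  replace (n1 * fst w + n2 * snd w - (n1 * fst z + n2 * snd z)) with (n1 * a + n2 * b) by (unfold a, b; ring).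
  assert (E : a ^ 2 + b ^ 2 - ((n1 * a + n2 * b) ^ 2 + (n1 * b - n2 * a) ^ 2) = (a ^ 2 + b ^ 2) * (1 - (n1 ^ 2 + n2 ^ 2))) by ring.
  rewrite Hn in E. pose proof (pow2_ge_0 (n1 * b - n2 * a)). nra.
Qed.

Lemma Av_Lf z : Av z = Lf 0 1 z.
Proof. unfold Av, Lf. ring. Qed.
Lemma Bv_Lf th z : Bv th z = Lf (sin th) (- cos th) z.
Proof. unfold Bv, Lf. ring. Qed.
Lemma unit_A : 0 ^ 2 + 1 ^ 2 = 1.
Proof. ring. Qed.
Lemma unit_B th : sin th ^ 2 + (- cos th) ^ 2 = 1.
Proof. pose proof (sin2_cos2 th). unfold Rsqr in H. nra. Qed.

Lemma A_lip w z : Rabs (Av w - Av z) <= dst w z.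
Proof. rewrite !Av_Lf. apply Lf_lip, unit_A. Qed.
Lemma B_lip th w z : Rabs (Bv th w - Bv th z) <= dst w z.
Proof. rewrite !Bv_Lf. apply Lf_lip, unit_B. Qed.

Lemma sec_char_le th z : 0 < th <= PI -> (sector th z <-> Av z > 0 /\ Bv th z > 0).
Proof.
  intros Hth. split.
  - intros Hs. pose proof PI_RGT_0 as Hpi. destruct (sec_fwd th z) as [Hl _]; auto; lra.
  - intros [H1 H2]. apply sec_bwd_le; auto.
Qed.

Lemma sec_char_gt th z : PI < th < 2 * PI -> (sector th z <-> Av z > 0 \/ Bv th z > 0).
Proof.
  intros Hth. split.
  - intros Hs. pose proof PI_RGT_0 as Hpi. destruct (sec_fwd th z) as [_ Hg]; auto; lra.
  - intros H. apply sec_bwd_gt; auto.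
Qed.

Lemma bd_notS th z : 0 < th < 2 * PI -> boundary (sector th) z -> ~ sector th z.
Proof.
  intros Hth Hbd Hs.
  destruct (Rle_lt_dec th PI) as [Hle|Hgt].
  - apply (sec_char_le th z) in Hs as [H1 H2]; [|lra].
    destruct (Hbd (Rmin (Av z) (Bv th z))) as [_ [w [Hw Hd]]]. { apply Rmin_pos; lra. }
    apply Hw. apply sec_char_le; [lra|]. rewrite dst_fold in Hd.
    pose proof (A_lip w z). pose proof (B_lip th w z). pose proof (Rmin_l (Av z) (Bv th z)).
    pose proof (Rmin_r (Av z) (Bv th z)). unfold Rabs in *. 
    destruct (Rcase_abs (Av w - Av z)); destruct (Rcase_abs (Bv th w - Bv th z)); split; lra.
  - apply (sec_char_gt th z) in Hs; [|lra].
    destruct Hs as [H1|H1].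
    + destruct (Hbd (Av z)) as [_ [w [Hw Hd]]]; [lra|].
      apply Hw. apply sec_char_gt; [lra|]. rewrite dst_fold in Hd. left.
      pose proof (A_lip w z). unfold Rabs in *. destruct (Rcase_abs (Av w - Av z)); lra.
    + destruct (Hbd (Bv th z)) as [_ [w [Hw Hd]]]; [lra|].
      apply Hw. apply sec_char_gt; [lra|]. rewrite dst_fold in Hd. right.
      pose proof (B_lip th w z). unfold Rabs in *. destruct (Rcase_abs (Bv th w - Bv th z)); lra.
Qed.

Lemma notS_le th z : 0 < th <= PI -> ~ sector th z -> Av z <= 0 \/ Bv th z <= 0.
Proof.
  intros Hth H. destruct (Rle_lt_dec (Av z) 0); auto. destruct (Rle_lt_dec (Bv th z) 0); auto.
  exfalso. apply H. apply sec_char_le; auto; lra.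
Qed.

Lemma notS_gt th z : PI < th < 2 * PI -> ~ sector th z -> Av z <= 0 /\ Bv th z <= 0.
Proof.
  intros Hth H. split; apply Rnot_lt_le; intros Hc; apply H; apply sec_char_gt; auto; lra.
Qed.

Lemma origin_notS th : ~ sector th (0, 0).
Proof.
  intros [r [phi [Hr [Hphi E]]]]. injection E as E1 E2.
  pose proof (sin2_cos2 phi). unfold Rsqr in H.
  assert (cos phi = 0) by (apply Rmult_eq_reg_l with r; lra).
  assert (sin phi = 0) by (apply Rmult_eq_reg_l with r; lra). nra.
Qed.

Lemma sec_ne th : 0 < th -> sector th (cos (th / 2), sin (th / 2)).
Proof. intros H. exists 1, (th / 2). repeat split; try lra; f_equal; ring. Qed.

Lemma sec_bd_ne th : 0 < th -> exists z, boundary (sector th) z.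
Proof. intros H. eapply bd_ne. apply (sec_ne th H). apply origin_notS. Qed.


Lemma seg_sum a b l : 0 <= l <= 1 -> dst a (pt a b l) + dst (pt a b l) b = dst a b.
Proof.
  intros Hl.
  replace (dst a (pt a b l)) with (dst (pt a b 0) (pt a b l)) by (rewrite pt0; auto).
  replace (dst (pt a b l) b) with (dst (pt a b l) (pt a b 1)) by (rewrite pt1; auto).
  replace (dst a b) with (dst (pt a b 0) (pt a b 1)) by (rewrite pt0, pt1; auto).
  rewrite !dst_pt. rewrite (Rabs_left1 (0 - l)) by lra. rewrite (Rabs_left1 (l - 1)) by lra.
  rewrite (Rabs_left1 (0 - 1)) by lra. ring.
Qed.

Lemma dst_sq a b : dst a b ^ 2 = (fst a - fst b) ^ 2 + (snd a - snd b) ^ 2.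
Proof. rewrite dst_eq. apply pow2_sqrt. apply Rplus_le_le_0_compat; apply pow2_ge_0. Qed.

Lemma dst_le_sq a b c d : dst a b ^ 2 <= dst c d ^ 2 -> dst a b <= dst c d.
Proof. intros H. pose proof (dst_ge0 a b). pose proof (dst_ge0 c d). nra. Qed.

Definition refl (n1 n2 : R) (y : C) : C :=
  (fst y - 2 * Lf n1 n2 y * n1, snd y - 2 * Lf n1 n2 y * n2).

Lemma refl_L n1 n2 y : n1 ^ 2 + n2 ^ 2 = 1 -> Lf n1 n2 (refl n1 n2 y) = - Lf n1 n2 y.
Proof.
  intros Hn. unfold refl, Lf; simpl.
  transitivity ((n1 * fst y + n2 * snd y) * (1 - 2 * (n1 ^ 2 + n2 ^ 2))); [ring|]. rewrite Hn. ring.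
Qed.

Lemma refl_dst_z n1 n2 y z : n1 ^ 2 + n2 ^ 2 = 1 ->
  dst z y ^ 2 = dst z (refl n1 n2 y) ^ 2 - 4 * Lf n1 n2 z * Lf n1 n2 y.
Proof.
  intros Hn. rewrite !dst_sq. unfold refl, Lf; simpl.
  transitivity ((fst z - (fst y - 2 * (n1 * fst y + n2 * snd y) * n1)) ^ 2 + (snd z - (snd y - 2 * (n1 * fst y + n2 * snd y) * n2)) ^ 2
     - 4 * (n1 * fst z + n2 * snd z) * (n1 * fst y + n2 * snd y) + 4 * (n1 * fst y + n2 * snd y) ^ 2 * (1 - (n1 ^ 2 + n2 ^ 2))).
  - ring.
  - rewrite Hn. ring.
Qed.

Lemma refl_dst_x n1 n2 x y : n1 ^ 2 + n2 ^ 2 = 1 ->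
  dst x (refl n1 n2 y) ^ 2 = dst x y ^ 2 + 4 * Lf n1 n2 x * Lf n1 n2 y.
Proof.
  intros Hn. rewrite !dst_sq. unfold refl, Lf; simpl.
  transitivity ((fst x - fst y) ^ 2 + (snd x - snd y) ^ 2 + 4 * (n1 * fst x + n2 * snd x) * (n1 * fst y + n2 * snd y)
     - 4 * (n1 * fst y + n2 * snd y) ^ 2 * (1 - (n1 ^ 2 + n2 ^ 2))).
  - ring.
  - rewrite Hn. ring.
Qed.

Lemma refl_lb n1 n2 x y z : n1 ^ 2 + n2 ^ 2 = 1 -> Lf n1 n2 z <= 0 -> 0 <= Lf n1 n2 x -> 0 <= Lf n1 n2 y ->
  sqrt (dst x y ^ 2 + 4 * Lf n1 n2 x * Lf n1 n2 y) <= dst x z + dst z y.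
Proof.
  intros Hn Hz Hx Hy.
  assert (E : sqrt (dst x y ^ 2 + 4 * Lf n1 n2 x * Lf n1 n2 y) = dst x (refl n1 n2 y)).
  { rewrite <- refl_dst_x by auto. apply sqrt_pow2. apply dst_ge0. }
  rewrite E. pose proof (dst_tri x z (refl n1 n2 y)).
  assert (dst z (refl n1 n2 y) <= dst z y).
  { apply dst_le_sq. rewrite (refl_dst_z n1 n2 y z Hn). nra. }
  lra.
Qed.

Definition rpt (n1 n2 : R) (x y : C) : C :=
  pt (refl n1 n2 y) x (Lf n1 n2 y / (Lf n1 n2 x + Lf n1 n2 y)).

Lemma Lf_pt n1 n2 a b l : Lf n1 n2 (pt a b l) = Lf n1 n2 a + l * (Lf n1 n2 b - Lf n1 n2 a).
Proof. unfold Lf, pt; simpl. ring. Qed.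

Lemma rpt_L n1 n2 x y : n1 ^ 2 + n2 ^ 2 = 1 -> 0 < Lf n1 n2 x + Lf n1 n2 y -> Lf n1 n2 (rpt n1 n2 x y) = 0.
Proof.
  intros Hn Hs. unfold rpt. rewrite Lf_pt, refl_L by auto. field. lra.
Qed.

Lemma rpt_sum n1 n2 x y : n1 ^ 2 + n2 ^ 2 = 1 -> 0 <= Lf n1 n2 x -> 0 <= Lf n1 n2 y -> 0 < Lf n1 n2 x + Lf n1 n2 y ->
  dst x (rpt n1 n2 x y) + dst (rpt n1 n2 x y) y = sqrt (dst x y ^ 2 + 4 * Lf n1 n2 x * Lf n1 n2 y).
Proof.
  intros Hn Hx Hy Hs.
  assert (E : sqrt (dst x y ^ 2 + 4 * Lf n1 n2 x * Lf n1 n2 y) = dst x (refl n1 n2 y)).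
  { rewrite <- refl_dst_x by auto. apply sqrt_pow2. apply dst_ge0. }
  rewrite E.
  assert (E2 : dst (rpt n1 n2 x y) y = dst (rpt n1 n2 x y) (refl n1 n2 y)).
  { pose proof (refl_dst_z n1 n2 y (rpt n1 n2 x y) Hn). rewrite rpt_L in H by auto.
    pose proof (dst_ge0 (rpt n1 n2 x y) y). pose proof (dst_ge0 (rpt n1 n2 x y) (refl n1 n2 y)).
    nra. }
  rewrite E2. unfold rpt.
  set (l := Lf n1 n2 y / (Lf n1 n2 x + Lf n1 n2 y)).
  assert (Hl : 0 <= l <= 1).
  { unfold l. split. apply Rdiv_le_0_compat; lra. apply Rmult_le_reg_r with (Lf n1 n2 x + Lf n1 n2 y); auto.
    unfold Rdiv. rewrite Rmult_assoc, Rinv_l by lra. lra. }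
  pose proof (seg_sum (refl n1 n2 y) x l Hl).
  rewrite (dst_sym x), (dst_sym x (refl n1 n2 y)), (dst_sym (pt _ _ _) (refl n1 n2 y)). lra.
Qed.


Definition foot (n1 n2 : R) (x : C) : C := (fst x - Lf n1 n2 x * n1, snd x - Lf n1 n2 x * n2).

Lemma foot_L n1 n2 x : n1 ^ 2 + n2 ^ 2 = 1 -> Lf n1 n2 (foot n1 n2 x) = 0.
Proof.
  intros Hn. unfold foot, Lf; simpl.
  transitivity ((n1 * fst x + n2 * snd x) * (1 - (n1 ^ 2 + n2 ^ 2))); [ring|]. rewrite Hn. ring.
Qed.

Lemma foot_dst n1 n2 x : n1 ^ 2 + n2 ^ 2 = 1 -> dst x (foot n1 n2 x) = Rabs (Lf n1 n2 x).
Proof.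
  intros Hn. rewrite dst_eq, <- sqrt_Rsqr_abs. f_equal. unfold foot, Rsqr; simpl.
  transitivity (Lf n1 n2 x * Lf n1 n2 x * (n1 ^ 2 + n2 ^ 2)); [ring|]. rewrite Hn. ring.
Qed.

Lemma Lx_le_dst n1 n2 x z : n1 ^ 2 + n2 ^ 2 = 1 -> Lf n1 n2 z <= 0 -> Lf n1 n2 x <= dst x z.
Proof. intros Hn Hz. pose proof (Lf_lip n1 n2 x z Hn). unfold Rabs in H. destruct (Rcase_abs (Lf n1 n2 x - Lf n1 n2 z)); lra. Qed.

Lemma le_notS_A th w : 0 < th <= PI -> Av w <= 0 -> ~ sector th w.
Proof. intros Hth Hw Hs. apply sec_char_le in Hs; auto. lra. Qed.
Lemma le_notS_B th w : 0 < th <= PI -> Bv th w <= 0 -> ~ sector th w.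
Proof. intros Hth Hw Hs. apply sec_char_le in Hs; auto. lra. Qed.

Lemma le_d_A th x : 0 < th <= PI -> sector th x -> dG (sector th) x <= Av x.
Proof.
  intros Hth Hx. pose proof Hx as Hx'. apply sec_char_le in Hx' as [HA HB]; auto.
  eapply Rle_trans. apply (dG_le _ x (foot 0 1 x)); auto.
  - apply le_notS_A; auto. rewrite Av_Lf, foot_L; [lra|apply unit_A].
  - rewrite foot_dst by apply unit_A. rewrite <- Av_Lf. rewrite Rabs_right; lra.
Qed.

Lemma le_d_B th x : 0 < th <= PI -> sector th x -> dG (sector th) x <= Bv th x.
Proof.
  intros Hth Hx. pose proof Hx as Hx'. apply sec_char_le in Hx' as [HA HB]; auto.
  eapply Rle_trans. apply (dG_le _ x (foot (sin th) (- cos th) x)); auto.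
  - apply le_notS_B; auto. rewrite Bv_Lf, foot_L; [lra|apply unit_B].
  - rewrite foot_dst by apply unit_B. rewrite <- Bv_Lf. rewrite Rabs_right; lra.
Qed.

Lemma le_d_ge th x : 0 < th <= PI -> Rmin (Av x) (Bv th x) <= dG (sector th) x.
Proof.
  intros Hth. apply dG_lb. apply sec_bd_ne; lra.
  intros z Hz. apply bd_notS in Hz; [|lra]. apply notS_le in Hz; auto.
  destruct Hz as [Hz|Hz].
  - rewrite Av_Lf in *. pose proof (Lx_le_dst 0 1 x z unit_A Hz). pose proof (Rmin_l (Lf 0 1 x) (Bv th x)). lra.
  - rewrite Bv_Lf in *. pose proof (Lx_le_dst _ _ x z (unit_B th) Hz). pose proof (Rmin_r (Av x) (Lf (sin th) (- cos th) x)). lra.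
Qed.

Lemma le_d_eq th x : 0 < th <= PI -> sector th x -> dG (sector th) x = Rmin (Av x) (Bv th x).
Proof.
  intros Hth Hx. apply Rle_antisym; [|apply le_d_ge; auto].
  pose proof (le_d_A th x Hth Hx). pose proof (le_d_B th x Hth Hx).
  unfold Rmin; destruct (Rle_dec (Av x) (Bv th x)); lra.
Qed.

Lemma le_Dn_lb th x y : 0 < th <= PI -> sector th x -> sector th y ->
  Rmin (sqrt (dst x y ^ 2 + 4 * Av x * Av y)) (sqrt (dst x y ^ 2 + 4 * Bv th x * Bv th y)) <= Dn (sector th) x y.
Proof.
  intros Hth Hx Hy. apply sec_char_le in Hx as [HAx HBx]; auto. apply sec_char_le in Hy as [HAy HBy]; auto.
  apply Dn_lb. apply sec_bd_ne; lra.
  intros z Hz. apply bd_notS in Hz; [|lra]. apply notS_le in Hz; auto.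
  destruct Hz as [Hz|Hz].
  - eapply Rle_trans; [apply Rmin_l|]. rewrite !Av_Lf in *. apply refl_lb; auto using unit_A; lra.
  - eapply Rle_trans; [apply Rmin_r|]. rewrite !Bv_Lf in *. apply refl_lb; auto using unit_B; lra.
Qed.

Lemma le_Dn_ubA th x y : 0 < th <= PI -> sector th x -> sector th y ->
  Dn (sector th) x y <= sqrt (dst x y ^ 2 + 4 * Av x * Av y).
Proof.
  intros Hth Hx Hy. pose proof Hx as Hx'. pose proof Hy as Hy'.
  apply sec_char_le in Hx' as [HAx HBx]; auto. apply sec_char_le in Hy' as [HAy HBy]; auto.
  eapply Rle_trans. apply (Dn_le _ x y (rpt 0 1 x y)); auto.
  - apply le_notS_A; auto. rewrite Av_Lf, rpt_L; auto using unit_A; try lra. rewrite <- !Av_Lf; lra.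
  - rewrite rpt_sum; auto using unit_A; rewrite <- ?Av_Lf; lra.
Qed.

Lemma le_Dn_ubB th x y : 0 < th <= PI -> sector th x -> sector th y ->
  Dn (sector th) x y <= sqrt (dst x y ^ 2 + 4 * Bv th x * Bv th y).
Proof.
  intros Hth Hx Hy. pose proof Hx as Hx'. pose proof Hy as Hy'.
  apply sec_char_le in Hx' as [HAx HBx]; auto. apply sec_char_le in Hy' as [HAy HBy]; auto.
  eapply Rle_trans. apply (Dn_le _ x y (rpt (sin th) (- cos th) x y)); auto.
  - apply le_notS_B; auto. rewrite Bv_Lf, rpt_L; auto using unit_B; try lra. rewrite <- !Bv_Lf; lra.
  - rewrite rpt_sum; auto using unit_B; rewrite <- ?Bv_Lf; lra.
Qed.


Lemma II_num u v u' v' t s : 0 < u -> u <= v -> 0 < v' -> v' <= u' -> 0 <= s -> 0 <= t ->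
  (v - u) * (u' - v') <= s ^ 2 * t ^ 2 ->
  t ^ 2 + 4 * Rmin (u * u') (v * v') <= (1 + s) * (t ^ 2 + 4 * (u * v')).
Proof.
  intros Hu Huv Hv' Hv'u' Hs Ht HPQ.
  set (m0 := Rmin (u * (u' - v')) (v' * (v - u))).
  assert (Hm : Rmin (u * u') (v * v') = u * v' + m0).
  { unfold m0, Rmin. destruct (Rle_dec (u * u') (v * v')); destruct (Rle_dec (u * (u' - v')) (v' * (v - u))); nra. }
  assert (Hm0 : 0 <= m0) by (unfold m0; apply Rmin_glb; nra).
  assert (Hm2 : m0 * m0 <= u * v' * (s ^ 2 * t ^ 2)).
  { assert (m0 * m0 <= (u * (u' - v')) * (v' * (v - u))).
    { assert (0 <= u * (u' - v')) by nra. assert (0 <= v' * (v - u)) by nra.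
      unfold m0, Rmin. set (a := u * (u' - v')) in *. set (b := v' * (v - u)) in *.
      destruct (Rle_dec a b); nra. }
    assert ((u * (u' - v')) * (v' * (v - u)) = u * v' * ((v - u) * (u' - v'))) by ring.
    assert (0 <= u * v') by nra. nra. }
  assert (4 * m0 <= s * (t ^ 2 + 4 * (u * v'))).
  { apply Rnot_lt_le. intros Hc.
    assert (Hsq : (s * (t ^ 2 + 4 * (u * v'))) ^ 2 < (4 * m0) ^ 2).
    { assert (0 <= s * (t ^ 2 + 4 * (u * v'))) by (apply Rmult_le_pos; nra).
      set (X := s * (t ^ 2 + 4 * (u * v'))) in *. set (Y := 4 * m0) in *. nra. }
    assert (16 * (u * v') * t ^ 2 <= (t ^ 2 + 4 * (u * v')) ^ 2) by (pose proof (pow2_ge_0 (t ^ 2 - 4 * (u * v'))); nra).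
    assert (s ^ 2 * (16 * (u * v') * t ^ 2) <= s ^ 2 * (t ^ 2 + 4 * (u * v')) ^ 2) by (apply Rmult_le_compat_l; nra).
    nra. }
  rewrite Hm. nra.
Qed.

Lemma cauchy2 a b d1 d2 : (a * d1 + b * d2) ^ 2 <= (a ^ 2 + b ^ 2) * (d1 ^ 2 + d2 ^ 2).
Proof.
  assert (E : (a ^ 2 + b ^ 2) * (d1 ^ 2 + d2 ^ 2) = (a * d1 + b * d2) ^ 2 + (a * d2 - b * d1) ^ 2) by ring.
  rewrite E. pose proof (pow2_ge_0 (a * d2 - b * d1)). lra.
Qed.

Lemma cos_half th : cos th = 2 * cos (th / 2) ^ 2 - 1.
Proof. pose proof (cos_2a_cos (th / 2)). replace (2 * (th / 2)) with th in H by field. rewrite H. ring. Qed.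

Lemma sin_half_sq th : cos th = 1 - 2 * sin (th / 2) ^ 2.
Proof. pose proof (cos_2a_sin (th / 2)). replace (2 * (th / 2)) with th in H by field. rewrite H. ring. Qed.

Lemma PQ_bound th x y : (Bv th x - Av x) * (Av y - Bv th y) <= cos (th / 2) ^ 2 * dst x y ^ 2.
Proof.
  set (P := Av y - Bv th y). set (Q := Bv th x - Av x).
  set (d1 := fst y - fst x). set (d2 := snd y - snd x).
  assert (EPQ : P + Q = - sin th * d1 + (1 + cos th) * d2) by (unfold P, Q, d1, d2, Av, Bv; ring).
  assert (Et : dst x y ^ 2 = d1 ^ 2 + d2 ^ 2) by (rewrite dst_sq; unfold d1, d2; ring).
  pose proof (cauchy2 (- sin th) (1 + cos th) d1 d2) as Hc.
  assert (Em : (- sin th) ^ 2 + (1 + cos th) ^ 2 = 4 * cos (th / 2) ^ 2).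
  { pose proof (sin2_cos2 th). unfold Rsqr in H.
    transitivity (sin th * sin th + cos th * cos th + 1 + 2 * cos th); [ring|]. rewrite H. rewrite (cos_half th). ring. }
  rewrite <- EPQ, Em, <- Et in Hc.
  pose proof (pow2_ge_0 (P - Q)). nra.
Qed.


Lemma sqrt_c_mul c E : 0 <= c -> 0 <= E -> sqrt (c ^ 2 * E) = c * sqrt E.
Proof. intros Hc HE. rewrite sqrt_mult by nra. rewrite sqrt_pow2 by auto. ring. Qed.

Lemma c4_sq th : (sqrt 2 * cos (th / 4)) ^ 2 = 1 + cos (th / 2).
Proof.
  rewrite Rpow_mult_distr. rewrite pow2_sqrt by lra. rewrite (cos_half (th / 2)).
  replace (th / 2 / 2) with (th / 4) by field. ring.
Qed.

Lemma s4_sq th : (sqrt 2 * sin (th / 4)) ^ 2 = 1 - cos (th / 2).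
Proof.
  rewrite Rpow_mult_distr. rewrite pow2_sqrt by lra. rewrite (sin_half_sq (th / 2)).
  replace (th / 2 / 2) with (th / 4) by field. ring.
Qed.

Lemma le_main th x y : 0 < th <= PI -> sector th x -> sector th y ->
  sG (sector th) x y <= pG (sector th) x y /\
  pG (sector th) x y <= sqrt 2 * cos (th / 4) * sG (sector th) x y.
Proof.
  intros Hth Hx Hy. rewrite sG_eq. unfold pG. rewrite !dst_fold.
  pose proof PI_RGT_0 as Hpi.
  pose proof (le_d_eq th x Hth Hx) as Edx. pose proof (le_d_eq th y Hth Hy) as Edy.
  pose proof Hx as Hx'. pose proof Hy as Hy'.
  apply sec_char_le in Hx' as [HAx HBx]; auto. apply sec_char_le in Hy' as [HAy HBy]; auto.
  set (t := dst x y). set (dx := dG (sector th) x) in *. set (dy := dG (sector th) y) in *.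
  set (D := Dn (sector th) x y).
  assert (Ht : 0 <= t) by apply dst_ge0.
  assert (Hdx : 0 < dx) by (rewrite Edx; apply Rmin_pos; lra).
  assert (Hdy : 0 < dy) by (rewrite Edy; apply Rmin_pos; lra).
  assert (HE : 0 < t ^ 2 + 4 * dx * dy) by nra.
  assert (HsE : 0 < sqrt (t ^ 2 + 4 * dx * dy)) by (apply sqrt_lt_R0; auto).
  assert (Hlb : sqrt (t ^ 2 + 4 * dx * dy) <= D).
  { eapply Rle_trans; [|apply le_Dn_lb; auto]. apply Rmin_glb; apply sqrt_le_1_alt.
    - assert (dx <= Av x) by (rewrite Edx; apply Rmin_l). assert (dy <= Av y) by (rewrite Edy; apply Rmin_l). fold t. nra.
    - assert (dx <= Bv th x) by (rewrite Edx; apply Rmin_r). assert (dy <= Bv th y) by (rewrite Edy; apply Rmin_r). fold t. nra. }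
  set (s := cos (th / 2)).
  assert (Hs : 0 <= s). { unfold s. apply cos_ge_0; lra. }
  assert (Hc : 0 < cos (th / 4)) by (apply cos_gt_0; lra).
  assert (HD2 : D <= sqrt ((1 + s) * (t ^ 2 + 4 * dx * dy))).
  { pose proof (le_Dn_ubA th x y Hth Hx Hy) as HA. pose proof (le_Dn_ubB th x y Hth Hx Hy) as HB.
    fold t D in HA, HB.
    assert (Hmin : D <= sqrt (t ^ 2 + 4 * Rmin (Av x * Av y) (Bv th x * Bv th y))).
    { unfold Rmin. destruct (Rle_dec (Av x * Av y) (Bv th x * Bv th y)); rewrite <- Rmult_assoc; auto. }
    eapply Rle_trans; [apply Hmin|]. apply sqrt_le_1_alt.
    pose proof (PQ_bound th x y) as PQ1. pose proof (PQ_bound th y x) as PQ2. rewrite dst_sym in PQ2. fold t s in PQ1, PQ2.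
    rewrite Edx, Edy.
    destruct (Rle_dec (Av x) (Bv th x)) as [h1|h1]; destruct (Rle_dec (Av y) (Bv th y)) as [h2|h2].
    - rewrite (Rmin_left (Av x)), (Rmin_left (Av y)) by lra.
      assert (Rmin (Av x * Av y) (Bv th x * Bv th y) <= Av x * Av y) by apply Rmin_l.
      assert (0 <= s * (t ^ 2 + 4 * Av x * Av y)) by (apply Rmult_le_pos; nra). nra.
    - rewrite (Rmin_left (Av x)), (Rmin_right (Av y)) by lra.
      pose proof (II_num (Av x) (Bv th x) (Av y) (Bv th y) t s) as K.
      assert (4 * Av x * Bv th y = 4 * (Av x * Bv th y)) by ring.
      assert (t ^ 2 + 4 * Rmin (Av x * Av y) (Bv th x * Bv th y) <= (1 + s) * (t ^ 2 + 4 * (Av x * Bv th y))) by (apply K; lra).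
      lra.
    - rewrite (Rmin_right (Av x)), (Rmin_left (Av y)) by lra.
      pose proof (II_num (Av y) (Bv th y) (Av x) (Bv th x) t s) as K.
      rewrite (Rmult_comm (Av y)), (Rmult_comm (Bv th y)) in K.
      assert (4 * Bv th x * Av y = 4 * (Av y * Bv th x)) by ring.
      assert (t ^ 2 + 4 * Rmin (Av x * Av y) (Bv th x * Bv th y) <= (1 + s) * (t ^ 2 + 4 * (Av y * Bv th x))) by (apply K; lra).
      lra.
    - rewrite (Rmin_right (Av x)), (Rmin_right (Av y)) by lra.
      assert (Rmin (Av x * Av y) (Bv th x * Bv th y) <= Bv th x * Bv th y) by apply Rmin_r.
      assert (0 <= s * (t ^ 2 + 4 * Bv th x * Bv th y)) by (apply Rmult_le_pos; nra). nra. }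
  split.
  - replace (t / sqrt (t ^ 2 + 4 * dx * dy)) with (1 * (t / sqrt (t ^ 2 + 4 * dx * dy))) by ring.
    apply div_cmp; lra.
  - apply div_cmp; auto; try lra.
    pose proof sqrt2_pos. rewrite <- sqrt_c_mul by (try apply Rmult_le_pos; lra). rewrite c4_sq. fold s. exact HD2.
Qed.


Lemma sq_lt a b : 0 <= a -> a < b -> a * a < b * b.
Proof. intros. nra. Qed.

Lemma sq_cmp a b : 0 <= a -> b * b < a * a -> b < a.
Proof. intros. nra. Qed.

Lemma num1 x1 x2 y1 y2 nx ny : 0 < nx -> 0 < ny -> nx * nx = x1 ^ 2 + x2 ^ 2 -> ny * ny = y1 ^ 2 + y2 ^ 2 ->
  0 < x2 -> 0 < y2 -> 0 < ny * x1 + nx * y1 -> 0 <= x1 * y2 + y1 * x2.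
Proof.
  intros Hnx Hny Ex Ey Hx2 Hy2 H.
  destruct (Rle_lt_dec 0 x1) as [h1|h1]; destruct (Rle_lt_dec 0 y1) as [h2|h2].
  - nra.
  - assert (Ha : 0 <= - (nx * y1)) by nra. assert (Hb : - (nx * y1) < ny * x1) by lra.
    pose proof (sq_lt _ _ Ha Hb) as K.
    assert (K2 : (x1 ^ 2 + x2 ^ 2) * (y1 * y1) < (y1 ^ 2 + y2 ^ 2) * (x1 * x1)).
    { rewrite <- Ex, <- Ey. replace (- (nx * y1) * - (nx * y1)) with (nx * nx * (y1 * y1)) in K by ring.
      replace (ny * x1 * (ny * x1)) with (ny * ny * (x1 * x1)) in K by ring. lra. }
    assert (K3 : (- (x2 * y1)) * (- (x2 * y1)) < (y2 * x1) * (y2 * x1)) by lra.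
    assert (- (x2 * y1) < y2 * x1) by (apply sq_cmp; [nra|exact K3]). lra.
  - assert (Ha : 0 <= - (ny * x1)) by nra. assert (Hb : - (ny * x1) < nx * y1) by lra.
    pose proof (sq_lt _ _ Ha Hb) as K.
    assert (K2 : (y1 ^ 2 + y2 ^ 2) * (x1 * x1) < (x1 ^ 2 + x2 ^ 2) * (y1 * y1)).
    { rewrite <- Ex, <- Ey. replace (- (ny * x1) * - (ny * x1)) with (ny * ny * (x1 * x1)) in K by ring.
      replace (nx * y1 * (nx * y1)) with (nx * nx * (y1 * y1)) in K by ring. lra. }
    assert (K3 : (- (y2 * x1)) * (- (y2 * x1)) < (x2 * y1) * (x2 * y1)) by lra.
    assert (- (y2 * x1) < x2 * y1) by (apply sq_cmp; [nra|exact K3]). lra.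
  - nra.
Qed.

Lemma num2 x1 x2 y1 y2 nx ny : 0 < nx -> 0 < ny -> nx * nx = x1 ^ 2 + x2 ^ 2 -> ny * ny = y1 ^ 2 + y2 ^ 2 ->
  x2 <= 0 -> 0 < y2 -> 0 < ny * x1 + nx * y1 -> 0 < ny * x2 + nx * y2 -> 0 <= x1 * y2 - x2 * y1.
Proof.
  intros Hnx Hny Ex Ey Hx2 Hy2 H1 H2.
  destruct (Rle_lt_dec 0 x1) as [h1|h1]; destruct (Rle_lt_dec 0 y1) as [h2|h2].
  - nra.
  - assert (Ha : 0 <= - (nx * y1)) by nra. assert (Hb : - (nx * y1) < ny * x1) by lra.
    pose proof (sq_lt _ _ Ha Hb) as K.
    assert (K2 : (x1 ^ 2 + x2 ^ 2) * (y1 * y1) < (y1 ^ 2 + y2 ^ 2) * (x1 * x1)).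
    { rewrite <- Ex, <- Ey. replace (- (nx * y1) * - (nx * y1)) with (nx * nx * (y1 * y1)) in K by ring.
      replace (ny * x1 * (ny * x1)) with (ny * ny * (x1 * x1)) in K by ring. lra. }
    assert (K3 : (x2 * y1) * (x2 * y1) < (y2 * x1) * (y2 * x1)) by lra.
    assert (x2 * y1 < y2 * x1) by (apply sq_cmp; [nra|exact K3]). lra.
  - assert (Ha : 0 <= - (ny * x1)) by nra. assert (Hb : - (ny * x1) < nx * y1) by lra.
    pose proof (sq_lt _ _ Ha Hb) as K.
    assert (K2 : (y1 ^ 2 + y2 ^ 2) * (x1 * x1) < (x1 ^ 2 + x2 ^ 2) * (y1 * y1)).
    { rewrite <- Ex, <- Ey. replace (- (ny * x1) * - (ny * x1)) with (ny * ny * (x1 * x1)) in K by ring.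
      replace (nx * y1 * (nx * y1)) with (nx * nx * (y1 * y1)) in K by ring. lra. }
    assert (Ha' : 0 <= - (ny * x2)) by nra. assert (Hb' : - (ny * x2) < nx * y2) by lra.
    pose proof (sq_lt _ _ Ha' Hb') as K'.
    assert (K2' : (y1 ^ 2 + y2 ^ 2) * (x2 * x2) < (x1 ^ 2 + x2 ^ 2) * (y2 * y2)).
    { rewrite <- Ex, <- Ey. replace (- (ny * x2) * - (ny * x2)) with (ny * ny * (x2 * x2)) in K' by ring.
      replace (nx * y2 * (nx * y2)) with (nx * nx * (y2 * y2)) in K' by ring. lra. }
    lra.
  - nra.
Qed.

Lemma Cmod_sq v : Cmod v * Cmod v = fst v ^ 2 + snd v ^ 2.
Proof. unfold Cmod. apply sqrt_sqrt. nra. Qed.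

Lemma cross_core x y : 0 < Cmod x -> 0 < Cmod y -> snd x <= 0 -> 0 < snd y ->
  0 < Cmod y * fst x + Cmod x * fst y -> 0 < Cmod y * snd x + Cmod x * snd y ->
  exists w, snd w = 0 /\ 0 <= fst w /\ dst x w + dst w y = dst x y.
Proof.
  intros Hnx Hny Hx2 Hy2 H1 H2.
  pose proof (num2 (fst x) (snd x) (fst y) (snd y) (Cmod x) (Cmod y) Hnx Hny (Cmod_sq x) (Cmod_sq y) Hx2 Hy2 H1 H2) as N.
  set (l := snd x / (snd x - snd y)).
  assert (Hl : 0 <= l <= 1).
  { unfold l. replace (snd x / (snd x - snd y)) with ((- snd x) / (snd y - snd x)) by (field; lra).
    split. apply Rdiv_le_0_compat; lra.
    apply Rmult_le_reg_r with (snd y - snd x); [lra|]. unfold Rdiv. rewrite Rmult_assoc, Rinv_l by lra. lra. }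
  exists (pt x y l). split; [|split].
  - unfold pt, l; simpl. field. lra.
  - unfold pt, l; simpl.
    replace (fst x + snd x / (snd x - snd y) * (fst y - fst x)) with ((fst x * snd y - snd x * fst y) / (snd y - snd x)) by (field; lra).
    apply Rdiv_le_0_compat; lra.
  - apply seg_sum; auto.
Qed.

Lemma aside_core x y : 0 < Cmod x -> 0 < Cmod y ->
  0 < Cmod y * fst x + Cmod x * fst y -> 0 < Cmod y * snd x + Cmod x * snd y ->
  exists w, snd w = 0 /\ 0 <= fst w /\
    (dst x w + dst w y = dst x y \/
     (0 < snd x /\ 0 < snd y /\ dst x w + dst w y = sqrt (dst x y ^ 2 + 4 * snd x * snd y))).
Proof.
  intros Hnx Hny H1 H2.
  destruct (Rle_lt_dec (snd x) 0) as [hx|hx].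
  - destruct (cross_core x y) as [w [? [? ?]]]; auto; try nra.
    exists w. auto.
  - destruct (Rle_lt_dec (snd y) 0) as [hy|hy].
    + destruct (cross_core y x) as [w [? [? ?]]]; auto; try lra.
      exists w. split; auto. split; auto. left. pose proof (dst_sym x w). pose proof (dst_sym w y). pose proof (dst_sym x y). lra.
    + pose proof (num1 (fst x) (snd x) (fst y) (snd y) (Cmod x) (Cmod y) Hnx Hny (Cmod_sq x) (Cmod_sq y) hx hy H1) as N.
      exists (rpt 0 1 x y).
      assert (E2 : Lf 0 1 x = snd x) by (unfold Lf; ring). assert (E3 : Lf 0 1 y = snd y) by (unfold Lf; ring).
      split; [|split].
      * assert (K: Lf 0 1 (rpt 0 1 x y) = 0) by (apply rpt_L; [apply unit_A | rewrite E2, E3; lra]). transitivity (Lf 0 1 (rpt 0 1 x y)); [unfold Lf; ring | exact K].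
      * unfold rpt, pt, refl. rewrite ?E2, ?E3. simpl. rewrite ?E2, ?E3.
        replace (fst y - 2 * snd y * 0 + snd y / (snd x + snd y) * (fst x - (fst y - 2 * snd y * 0)))
          with ((fst x * snd y + fst y * snd x) / (snd x + snd y)) by (field; lra).
        apply Rdiv_le_0_compat; lra.
      * right. split; auto. split; auto. rewrite <- E2, <- E3. apply rpt_sum; auto using unit_A; lra.
Qed.


Definition Rf (th : R) (v : C) : C := (cos th * fst v + sin th * snd v, sin th * fst v - cos th * snd v).

Lemma sc1 th : sin th ^ 2 + cos th ^ 2 = 1.
Proof. pose proof (sin2_cos2 th). unfold Rsqr in H. nra. Qed.

Lemma Rf_invol th v : Rf th (Rf th v) = v.
Proof.
  destruct v as [v1 v2]. unfold Rf; simpl. pose proof (sc1 th).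
  f_equal.
  - transitivity (v1 * (sin th ^ 2 + cos th ^ 2)); [ring|]. rewrite H; ring.
  - transitivity (v2 * (sin th ^ 2 + cos th ^ 2)); [ring|]. rewrite H; ring.
Qed.

Lemma dst_Rf th a b : dst (Rf th a) (Rf th b) = dst a b.
Proof.
  rewrite !dst_eq. f_equal. unfold Rf; simpl. pose proof (sc1 th).
  transitivity (((fst a - fst b) ^ 2 + (snd a - snd b) ^ 2) * (sin th ^ 2 + cos th ^ 2)); [ring|]. rewrite H; ring.
Qed.

Lemma Cmod_Rf th v : Cmod (Rf th v) = Cmod v.
Proof.
  unfold Cmod. f_equal. unfold Rf; simpl. pose proof (sc1 th).
  transitivity ((fst v ^ 2 + snd v ^ 2) * (sin th ^ 2 + cos th ^ 2)); [ring|]. rewrite H; ring.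
Qed.

Lemma Av_Rf th v : Av (Rf th v) = Bv th v.
Proof. unfold Av, Bv, Rf; simpl. ring. Qed.

Lemma Bv_Rf th v : Bv th (Rf th v) = Av v.
Proof.
  unfold Av, Bv, Rf; simpl. pose proof (sc1 th).
  transitivity (snd v * (sin th ^ 2 + cos th ^ 2)); [ring|]. rewrite H; ring.
Qed.

Lemma gt_notS th w : PI < th < 2 * PI -> Av w <= 0 -> Bv th w <= 0 -> ~ sector th w.
Proof. intros Hth H1 H2 Hs. apply sec_char_gt in Hs; auto. lra. Qed.

Lemma gt_bdK th z : PI < th < 2 * PI -> boundary (sector th) z -> Av z <= 0 /\ Bv th z <= 0.
Proof. intros Hth Hz. apply notS_gt; auto. apply bd_notS; auto. pose proof PI_RGT_0. lra. Qed.

Lemma sin_neg_gt th : PI < th < 2 * PI -> sin th < 0.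
Proof.
  intros H. replace th with ((th - PI) + PI) by ring. rewrite neg_sin.
  assert (0 < sin (th - PI)) by (apply sin_gt_0; lra). lra.
Qed.

Lemma gt_bd_ne th : PI < th < 2 * PI -> exists z, boundary (sector th) z.
Proof. intros. apply sec_bd_ne. pose proof PI_RGT_0. lra. Qed.

Lemma gt_d_ge_A th x : PI < th < 2 * PI -> Av x <= dG (sector th) x.
Proof.
  intros Hth. apply dG_lb; [apply gt_bd_ne; auto|]. intros z Hz.
  destruct (gt_bdK th z Hth Hz) as [H1 _]. rewrite Av_Lf in *. apply Lx_le_dst; auto using unit_A.
Qed.

Lemma gt_d_ge_B th x : PI < th < 2 * PI -> Bv th x <= dG (sector th) x.
Proof.
  intros Hth. apply dG_lb; [apply gt_bd_ne; auto|]. intros z Hz.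
  destruct (gt_bdK th z Hth Hz) as [_ H1]. rewrite Bv_Lf in *. apply Lx_le_dst; auto using unit_B.
Qed.

Lemma Kstar_dot th q z : PI < th < 2 * PI -> fst q <= 0 -> fst q * cos th + snd q * sin th <= 0 ->
  Av z <= 0 -> Bv th z <= 0 -> fst q * fst z + snd q * snd z <= 0.
Proof.
  intros Hth H1 H2 Hz1 Hz2. pose proof (sin_neg_gt th Hth) as Hs. unfold Av, Bv in *.
  assert (E : sin th * (fst q * fst z + snd q * snd z) =
              (fst q * cos th + snd q * sin th) * snd z + fst q * (fst z * sin th - snd z * cos th)) by ring.
  assert (0 <= (fst q * cos th + snd q * sin th) * snd z) by nra.
  assert (0 <= fst q * (fst z * sin th - snd z * cos th)) by nra.
  nra.
Qed.

Lemma dot_le q d1 d2 : fst q * d1 + snd q * d2 <= Cmod q * sqrt (d1 ^ 2 + d2 ^ 2).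
Proof.
  rewrite <- (sqrt_pow2 (Cmod q)) by apply Cmod_ge_0. rewrite <- sqrt_mult by (nra || apply pow2_ge_0).
  destruct (Rle_lt_dec (fst q * d1 + snd q * d2) 0). { pose proof (sqrt_pos ((Cmod q ^ 2) * (d1 ^ 2 + d2 ^ 2))). lra. }
  apply sq_le_sqrt; [lra|]. rewrite Cmod2_alt. unfold Re, Im. apply cauchy2.
Qed.

Lemma gt_d_ge_q th q x : PI < th < 2 * PI -> fst q <= 0 -> fst q * cos th + snd q * sin th <= 0 -> 0 < Cmod q ->
  fst q * fst x + snd q * snd x <= Cmod q * dG (sector th) x.
Proof.
  intros Hth H1 H2 Hq.
  assert ((fst q * fst x + snd q * snd x) / Cmod q <= dG (sector th) x).
  { apply dG_lb; [apply gt_bd_ne; auto|]. intros z Hz. destruct (gt_bdK th z Hth Hz) as [Hz1 Hz2].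
    pose proof (Kstar_dot th q z Hth H1 H2 Hz1 Hz2).
    pose proof (dot_le q (fst x - fst z) (snd x - snd z)). rewrite <- dst_eq in H0.
    apply Rmult_le_reg_r with (Cmod q); auto. unfold Rdiv. rewrite Rmult_assoc, Rinv_l by lra. nra. }
  apply Rmult_le_reg_r with (/ Cmod q). apply Rinv_0_lt_compat; auto.
  replace (Cmod q * dG (sector th) x * / Cmod q) with (dG (sector th) x) by (field; lra). exact H.
Qed.

Lemma gt_d_le_0 th x : PI < th < 2 * PI -> sector th x -> dG (sector th) x <= Cmod x.
Proof.
  intros Hth Hx. replace (Cmod x) with (dst x (0,0)).
  - apply dG_le; auto. apply gt_notS; auto; unfold Av, Bv; simpl; lra.
  - rewrite dst_eq. unfold Cmod. f_equal. simpl. ring.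
Qed.


Lemma quadform a1 a2 c1 c2 y1 y2 K : 0 <= K -> (a1 ^ 2 + a2 ^ 2) * (c1 ^ 2 + c2 ^ 2) <= K ^ 2 ->
  (a1 * y1 + a2 * y2) * (c1 * y1 + c2 * y2) - (a1 * c1 + a2 * c2) * (y1 ^ 2 + y2 ^ 2) / 2
  <= K / 2 * (y1 ^ 2 + y2 ^ 2).
Proof.
  intros HK H.
  set (al := (a1 * c1 - a2 * c2) / 2). set (be := (a1 * c2 + a2 * c1) / 2).
  set (Q := (a1 * y1 + a2 * y2) * (c1 * y1 + c2 * y2) - (a1 * c1 + a2 * c2) * (y1 ^ 2 + y2 ^ 2) / 2).
  assert (EQ : Q = al * (y1 ^ 2 - y2 ^ 2) + be * (2 * y1 * y2)) by (unfold Q, al, be; field).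
  pose proof (cauchy2 al be (y1 ^ 2 - y2 ^ 2) (2 * y1 * y2)) as Hc.
  rewrite <- EQ in Hc.
  assert (E1 : (y1 ^ 2 - y2 ^ 2) ^ 2 + (2 * y1 * y2) ^ 2 = (y1 ^ 2 + y2 ^ 2) ^ 2) by ring.
  assert (E2 : al ^ 2 + be ^ 2 = (a1 ^ 2 + a2 ^ 2) * (c1 ^ 2 + c2 ^ 2) / 4) by (unfold al, be; field).
  rewrite E1, E2 in Hc.
  set (Y := y1 ^ 2 + y2 ^ 2) in *. assert (HY : 0 <= Y) by (unfold Y; nra).
  assert (Hq : Q ^ 2 <= (K / 2 * Y) ^ 2).
  { eapply Rle_trans; [exact Hc|]. assert (0 <= Y ^ 2) by nra.
    replace ((K / 2 * Y) ^ 2) with (K ^ 2 / 4 * Y ^ 2) by field. apply Rmult_le_compat_r; auto. lra. }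
  assert (0 <= K / 2 * Y) by (apply Rmult_le_pos; lra).
  destruct (Rle_lt_dec Q 0). lra.
  apply Rnot_lt_le. intros Hlt. assert (K / 2 * Y * (K / 2 * Y) < Q * Q) by (apply sq_lt; lra). nra.
Qed.

Lemma sharp n1 n2 m1 m2 r a1 a2 b1 b2 : n1 ^ 2 + n2 ^ 2 = 1 -> m1 ^ 2 + m2 ^ 2 = 1 -> 0 <= r ->
  2 - 2 * (n1 * m1 + n2 * m2) <= r ^ 2 ->
  2 * (n1 * a1 + n2 * a2) * (m1 * b1 + m2 * b2) - (a1 * b1 + a2 * b2)
  <= (1 + r) * (sqrt (a1 ^ 2 + a2 ^ 2) * sqrt (b1 ^ 2 + b2 ^ 2)).
Proof.
  intros Hn Hm Hr Hnm.
  set (mb := m1 * b1 + m2 * b2).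
  set (M1 := 2 * mb * n1 - b1). set (M2 := 2 * mb * n2 - b2).
  assert (E : 2 * (n1 * a1 + n2 * a2) * mb - (a1 * b1 + a2 * b2) = a1 * M1 + a2 * M2) by (unfold M1, M2; ring).
  rewrite E.
  pose proof (dot_le (a1, a2) M1 M2) as H1. unfold Cmod in H1. cbn [fst snd] in H1.
  assert (HM : sqrt (M1 ^ 2 + M2 ^ 2) <= (1 + r) * sqrt (b1 ^ 2 + b2 ^ 2)).
  { rewrite <- (sqrt_pow2 (1 + r)) by lra. rewrite <- sqrt_mult by (nra || nra). apply sqrt_le_1_alt.
    assert (EM : M1 ^ 2 + M2 ^ 2 = 4 * mb * ((m1 - n1) * b1 + (m2 - n2) * b2) + (b1 ^ 2 + b2 ^ 2) + 4 * mb ^ 2 * (n1 ^ 2 + n2 ^ 2 - 1))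
      by (unfold M1, M2, mb; ring).
    rewrite Hn in EM. replace (4 * mb ^ 2 * (1 - 1)) with 0 in EM by ring.
    pose proof (quadform m1 m2 (m1 - n1) (m2 - n2) b1 b2 r Hr) as Q.
    assert (Hcm : (m1 ^ 2 + m2 ^ 2) * ((m1 - n1) ^ 2 + (m2 - n2) ^ 2) <= r ^ 2).
    { rewrite Hm. replace ((m1 - n1) ^ 2 + (m2 - n2) ^ 2) with ((m1 ^ 2 + m2 ^ 2) + (n1 ^ 2 + n2 ^ 2) - 2 * (n1 * m1 + n2 * m2)) by ring.
      rewrite Hm, Hn. lra. }
    specialize (Q Hcm). fold mb in Q.
    assert (Hd : m1 * (m1 - n1) + m2 * (m2 - n2) = 1 - (n1 * m1 + n2 * m2)).
    { replace (m1 * (m1 - n1) + m2 * (m2 - n2)) with ((m1 ^ 2 + m2 ^ 2) - (n1 * m1 + n2 * m2)) by ring. rewrite Hm. ring. }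
    rewrite Hd in Q.
    assert (HB : 0 <= b1 ^ 2 + b2 ^ 2) by nra.
    assert ((1 - (n1 * m1 + n2 * m2)) * (b1 ^ 2 + b2 ^ 2) <= r ^ 2 / 2 * (b1 ^ 2 + b2 ^ 2)) by (apply Rmult_le_compat_r; lra).
    rewrite EM. nra. }
  assert (0 <= sqrt (a1 ^ 2 + a2 ^ 2)) by apply sqrt_pos.
  assert (sqrt (a1 ^ 2 + a2 ^ 2) * sqrt (M1 ^ 2 + M2 ^ 2) <= sqrt (a1 ^ 2 + a2 ^ 2) * ((1 + r) * sqrt (b1 ^ 2 + b2 ^ 2)))
    by (apply Rmult_le_compat_l; auto).
  replace ((1 + r) * (sqrt (a1 ^ 2 + a2 ^ 2) * sqrt (b1 ^ 2 + b2 ^ 2))) with (sqrt (a1 ^ 2 + a2 ^ 2) * ((1 + r) * sqrt (b1 ^ 2 + b2 ^ 2))) by ring.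
  lra.
Qed.


Lemma Kstar_angle th n1 n2 : PI < th < 2 * PI -> n1 ^ 2 + n2 ^ 2 = 1 -> n1 <= 0 ->
  n1 * cos th + n2 * sin th <= 0 ->
  exists a, 0 <= a <= th - PI /\ n1 = - sin a /\ n2 = cos a.
Proof.
  intros Hth Hn H1 H2.
  assert (Hb : -1 <= n2 <= 1) by (split; nra).
  exists (acos n2).
  assert (Hs : sin (acos n2) = - n1).
  { rewrite sin_acos by auto. apply sqrt_sq_eq; [lra|]. unfold Rsqr. nra. }
  assert (Hc : cos (acos n2) = n2) by (apply cos_acos; auto).
  pose proof (acos_bound n2).
  split; [|split; lra].
  split; [lra|].
  apply Rnot_lt_le. intros Hlt.
  assert (Hsn : 0 < sin (th - acos n2)) by (apply sin_gt_0; lra).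
  rewrite sin_minus, Hs, Hc in Hsn. nra.
Qed.

Lemma angle_dot th n1 n2 m1 m2 : PI < th < 2 * PI ->
  n1 ^ 2 + n2 ^ 2 = 1 -> n1 <= 0 -> n1 * cos th + n2 * sin th <= 0 ->
  m1 ^ 2 + m2 ^ 2 = 1 -> m1 <= 0 -> m1 * cos th + m2 * sin th <= 0 ->
  - cos th <= n1 * m1 + n2 * m2.
Proof.
  intros Hth Hn Hn1 Hn2 Hm Hm1 Hm2.
  destruct (Kstar_angle th n1 n2) as [a [Ha [-> ->]]]; auto.
  destruct (Kstar_angle th m1 m2) as [b [Hb [-> ->]]]; auto.
  replace (- sin a * - sin b + cos a * cos b) with (cos (a - b)) by (rewrite cos_minus; ring).
  assert (E : - cos th = cos (th - PI)) by (rewrite cos_minus, cos_PI, sin_PI; ring).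
  rewrite E.
  destruct (Rle_lt_dec b a).
  - apply cos_decr_1; lra.
  - rewrite (cos_sym (a - b)). replace (- (a - b)) with (b - a) by ring. apply cos_decr_1; lra.
Qed.

Lemma cover th v : PI < th < 2 * PI -> (Av v > 0 \/ Bv th v > 0) ->
  ~ (fst v <= 0 /\ fst v * cos th + snd v * sin th <= 0) ->
  (fst v > 0 /\ Av v > 0) \/ (fst v * cos th + snd v * sin th > 0 /\ Bv th v > 0).
Proof.
  intros Hth H Hn. pose proof (sin_neg_gt th Hth) as Hs. unfold Av, Bv in *.
  destruct H as [H|H].
  - destruct (Rlt_le_dec 0 (fst v)) as [h|h]; [left; lra|]. right.
    assert (Hp : fst v * cos th + snd v * sin th > 0) by (apply Rnot_le_lt; intros Hc; apply Hn; split; lra).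
    split; auto.
    assert (0 < snd v * (- sin th)) by (apply Rmult_lt_0_compat; lra).
    assert (Hfc : fst v * cos th > 0) by lra.
    assert (Hf : fst v < 0). { destruct (Req_dec (fst v) 0) as [e|e]. rewrite e in Hfc. lra. lra. }
    assert (Hc : cos th < 0). { apply Rnot_le_lt. intros Hc. assert (fst v * cos th <= 0). { apply Rmult_le_0_r; lra. } lra. }
    assert (0 < (- fst v) * (- sin th)) by (apply Rmult_lt_0_compat; lra).
    assert (0 < snd v * (- cos th)) by (apply Rmult_lt_0_compat; lra). lra.
  - destruct (Rlt_le_dec 0 (fst v * cos th + snd v * sin th)) as [h|h]; [right; lra|]. left.
    assert (Hp : fst v > 0) by (apply Rnot_le_lt; intros Hc; apply Hn; split; lra).
    split; auto. apply Rnot_le_lt. intros Hc.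
    assert (0 < fst v * (- sin th)) by (apply Rmult_lt_0_compat; lra).
    assert (Hsc : - snd v * cos th > 0) by lra.
    assert (Hsv : snd v < 0). { destruct (Req_dec (snd v) 0) as [e|e]. rewrite e in Hsc. lra. lra. }
    assert (Hcp : cos th > 0). { apply Rnot_le_lt. intros Hc'. assert (- snd v * cos th <= 0). { apply Rmult_le_0_l; lra. } lra. }
    assert (0 < fst v * cos th) by (apply Rmult_lt_0_compat; lra).
    assert (0 < (- snd v) * (- sin th)) by (apply Rmult_lt_0_compat; lra). lra.
Qed.

Lemma gt_d_le_n th x z : PI < th < 2 * PI -> sector th x -> Av z <= 0 -> Bv th z <= 0 ->
  exists n1 n2, n1 ^ 2 + n2 ^ 2 = 1 /\ n1 <= 0 /\ n1 * cos th + n2 * sin th <= 0 /\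
    dG (sector th) x <= n1 * (fst x - fst z) + n2 * (snd x - snd z).
Proof.
  intros Hth Hx Hz1 Hz2. pose proof (sin_neg_gt th Hth) as Hs. pose proof (sc1 th) as Hsc.
  set (v := (fst x - fst z, snd x - snd z)).
  assert (HAv : Av v = Av x - Av z) by (unfold v, Av; simpl; ring).
  assert (HBv : Bv th v = Bv th x - Bv th z) by (unfold v, Bv; simpl; ring).
  pose proof Hx as Hx'. apply sec_char_gt in Hx'; auto.
  assert (Hvn : Av v > 0 \/ Bv th v > 0) by (destruct Hx'; [left|right]; lra).
  assert (HzS : ~ sector th z) by (apply gt_notS; auto).
  destruct (classic (fst v <= 0 /\ fst v * cos th + snd v * sin th <= 0)) as [Hks|Hks].
  -
    set (nv := Cmod v).
    assert (Hnv : nv = dst x z) by (unfold nv, v, Cmod; rewrite dst_eq; reflexivity).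
    assert (Hnv2 : nv * nv = fst v ^ 2 + snd v ^ 2) by (apply Cmod_sq).
    assert (Hpos : 0 < nv).
    { destruct (Rle_lt_dec nv 0) as [h|h]; auto. assert (nv = 0) by (pose proof (Cmod_ge_0 v); fold nv in H; lra).
      assert (fst v = 0 /\ snd v = 0) by (split; nra). exfalso. unfold Av, Bv in Hvn. destruct H0 as [e1 e2].
      rewrite e1, e2 in Hvn. lra. }
    exists (fst v / nv), (snd v / nv). split; [|split; [|split]].
    + replace ((fst v / nv) ^ 2 + (snd v / nv) ^ 2) with ((fst v ^ 2 + snd v ^ 2) / (nv * nv)) by (field; lra).
      rewrite Hnv2. field. nra.
    + destruct Hks. apply Rmult_le_reg_r with nv; auto. unfold Rdiv. rewrite Rmult_assoc, Rinv_l by lra. lra.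
    + destruct Hks as [_ Hk]. replace (fst v / nv * cos th + snd v / nv * sin th) with ((fst v * cos th + snd v * sin th) / nv) by (field; lra).
      apply Rmult_le_reg_r with nv; auto. unfold Rdiv. rewrite Rmult_assoc, Rinv_l by lra. lra.
    + replace (fst v / nv * (fst x - fst z) + snd v / nv * (snd x - snd z)) with ((fst v ^ 2 + snd v ^ 2) / nv) by (unfold v; simpl; field; lra).
      rewrite <- Hnv2. replace (nv * nv / nv) with nv by (field; lra). rewrite Hnv. apply dG_le; auto.
  - destruct (cover th v Hth Hvn Hks) as [[Hf HA]|[Hk HB]].
    + exists 0, 1. split; [ring|]. split; [lra|]. split; [lra|].
      replace (0 * (fst x - fst z) + 1 * (snd x - snd z)) with (Av v) by (unfold Av, v; simpl; ring).
      eapply Rle_trans. apply (dG_le _ x (fst x, snd z)); auto.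
      * apply gt_notS; [exact Hth| |].
        -- unfold Av in *; simpl. lra.
        -- assert (Hp : 0 < fst v * (- sin th)) by (apply Rmult_lt_0_compat; lra).
           unfold v in Hp; simpl in Hp. unfold Bv in *; simpl. lra.
      * rewrite dst_eq. cbn [fst snd]. replace ((fst x - fst x) ^ 2 + (snd x - snd z) ^ 2) with ((Av v) ^ 2) by (unfold Av, v; simpl; ring).
        rewrite sqrt_pow2; lra.
    + set (k := fst v * cos th + snd v * sin th) in *.
      exists (sin th), (- cos th). split; [nra|]. split; [lra|]. split; [nra|].
      replace (sin th * (fst x - fst z) + - cos th * (snd x - snd z)) with (Bv th v) by (unfold Bv, v; simpl; ring).
      eapply Rle_trans. apply (dG_le _ x (fst z + k * cos th, snd z + k * sin th)); auto.
      * apply gt_notS; [exact Hth| |]; unfold Av, Bv in *; simpl in *.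
        -- assert (0 < k * (- sin th)) by (apply Rmult_lt_0_compat; lra). lra.
        -- replace ((fst z + k * cos th) * sin th - (snd z + k * sin th) * cos th) with (fst z * sin th - snd z * cos th) by ring. lra.
      * rewrite dst_eq. cbn [fst snd].
        replace ((fst x - (fst z + k * cos th)) ^ 2 + (snd x - (snd z + k * sin th)) ^ 2) with ((Bv th v) ^ 2).
        { rewrite sqrt_pow2; lra. }
        unfold k, Bv, v; simpl.
        set (a := fst x - fst z). set (b := snd x - snd z).
        replace (fst x - (fst z + (a * cos th + b * sin th) * cos th)) with (a - (a * cos th + b * sin th) * cos th) by (unfold a; ring).
        replace (snd x - (snd z + (a * cos th + b * sin th) * sin th)) with (b - (a * cos th + b * sin th) * sin th) by (unfold b; ring).
        assert (E : (a - (a * cos th + b * sin th) * cos th) ^ 2 + (b - (a * cos th + b * sin th) * sin th) ^ 2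
                    - (a * sin th - b * cos th) ^ 2
                    = (1 - (sin th ^ 2 + cos th ^ 2)) * (a ^ 2 + b ^ 2 - (a * cos th + b * sin th) ^ 2)) by ring.
        rewrite Hsc in E. lra.
Qed.


Lemma gt_d_pos th x : PI < th < 2 * PI -> sector th x -> 0 < dG (sector th) x.
Proof.
  intros Hth Hx. apply sec_char_gt in Hx; auto.
  pose proof (gt_d_ge_A th x Hth). pose proof (gt_d_ge_B th x Hth). destruct Hx; lra.
Qed.

Lemma gt_IV th x y z : PI < th < 2 * PI -> sector th x -> sector th y -> boundary (sector th) z ->
  dst x y ^ 2 + 4 * dG (sector th) x * dG (sector th) y <= (1 - cos (th / 2)) * (dst x z + dst z y) ^ 2.
Proof.
  intros Hth Hx Hy Hz. destruct (gt_bdK th z Hth Hz) as [Hz1 Hz2].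
  destruct (gt_d_le_n th x z Hth Hx Hz1 Hz2) as [n1 [n2 [Hn [Hn1 [Hn2 Hdx]]]]].
  destruct (gt_d_le_n th y z Hth Hy Hz1 Hz2) as [m1 [m2 [Hm [Hm1 [Hm2 Hdy]]]]].
  set (s := cos (th / 2)).
  assert (Hs : s < 0) by (unfold s; apply cos_lt_0; lra).
  set (r := - 2 * s).
  assert (Hr2 : 2 - 2 * (n1 * m1 + n2 * m2) <= r ^ 2).
  { pose proof (angle_dot th n1 n2 m1 m2 Hth Hn Hn1 Hn2 Hm Hm1 Hm2). unfold r, s. rewrite (cos_half th) in H. nra. }
  pose proof (sharp n1 n2 m1 m2 r (fst x - fst z) (snd x - snd z) (fst y - fst z) (snd y - snd z) Hn Hm ltac:(unfold r; lra) Hr2) as Sh.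
  rewrite <- !dst_eq in Sh. rewrite (dst_sym y z) in Sh.
  set (a := dst x z) in *. set (b := dst z y) in *.
  set (dx := dG (sector th) x) in *. set (dy := dG (sector th) y) in *.
  pose proof (gt_d_pos th x Hth Hx). pose proof (gt_d_pos th y Hth Hy). fold dx dy in H, H0.
  set (P := n1 * (fst x - fst z) + n2 * (snd x - snd z)) in *.
  set (Q := m1 * (fst y - fst z) + m2 * (snd y - snd z)) in *.
  assert (Hdd : dx * dy <= P * Q) by (apply Rmult_le_compat; lra).
  assert (Ht : dst x y ^ 2 = a ^ 2 + b ^ 2 - 2 * ((fst x - fst z) * (fst y - fst z) + (snd x - snd z) * (snd y - snd z))).
  { unfold a, b. rewrite (dst_sym z y), !dst_sq. ring. }
  rewrite Ht.
  assert (Ha : 0 <= a) by apply dst_ge0. assert (Hb : 0 <= b) by apply dst_ge0.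
  assert (0 <= - s * (a - b) ^ 2) by (apply Rmult_le_pos; [lra|apply pow2_ge_0]).
  unfold r in Sh. nra.
Qed.

Lemma gt_s_le_p th x y : PI < th < 2 * PI -> sector th x -> sector th y ->
  sG (sector th) x y <= sqrt 2 * sin (th / 4) * pG (sector th) x y.
Proof.
  intros Hth Hx Hy. rewrite sG_eq. unfold pG. rewrite dst_fold.
  pose proof (gt_d_pos th x Hth Hx). pose proof (gt_d_pos th y Hth Hy).
  set (t := dst x y). set (dx := dG (sector th) x) in *. set (dy := dG (sector th) y) in *.
  set (c := sqrt 2 * sin (th / 4)).
  assert (Hc : 0 < c) by (unfold c; apply Rmult_lt_0_compat; [apply sqrt2_pos|apply sin_gt_0; lra]).
  assert (Hc2 : c ^ 2 = 1 - cos (th / 2)) by (unfold c; apply s4_sq).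
  assert (Ht : 0 <= t) by apply dst_ge0.
  assert (HE : 0 < sqrt (t ^ 2 + 4 * dx * dy)) by (apply sqrt_lt_R0; nra).
  assert (HD : sqrt (t ^ 2 + 4 * dx * dy) / c <= Dn (sector th) x y).
  { apply Dn_lb; [apply gt_bd_ne; auto|]. intros z Hz.
    pose proof (gt_IV th x y z Hth Hx Hy Hz) as K. fold t dx dy in K. rewrite <- Hc2 in K.
    apply Rmult_le_reg_r with c; auto. unfold Rdiv. rewrite Rmult_assoc, Rinv_l, Rmult_1_r by lra.
    pose proof (dst_ge0 x z). pose proof (dst_ge0 z y).
    apply sqrt_le_sq. nra. nra. }
  assert (HD' : sqrt (t ^ 2 + 4 * dx * dy) <= c * Dn (sector th) x y).
  { apply Rmult_le_reg_r with (/ c). apply Rinv_0_lt_compat; auto.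
    replace (c * Dn (sector th) x y * / c) with (Dn (sector th) x y) by (field; lra). exact HD. }
  apply div_cmp; auto. nra.
Qed.


Lemma Cmod_pos_S th x : sector th x -> 0 < Cmod x.
Proof.
  intros Hx. destruct (Rle_lt_dec (Cmod x) 0) as [h|h]; auto.
  assert (Cmod x = 0) by (pose proof (Cmod_ge_0 x); lra).
  apply Cmod_eq_0 in H. subst. exfalso. apply (origin_notS th). exact Hx.
Qed.

Lemma dst_0 x : dst x (0, 0) = Cmod x.
Proof. rewrite dst_eq. unfold Cmod. f_equal. simpl. ring. Qed.
Lemma dst_0' x : dst (0, 0) x = Cmod x.
Proof. rewrite dst_sym. apply dst_0. Qed.

Lemma Rf_q th x y : Rf th (Cmod y * fst x + Cmod x * fst y, Cmod y * snd x + Cmod x * snd y) =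
  (Cmod (Rf th y) * fst (Rf th x) + Cmod (Rf th x) * fst (Rf th y), Cmod (Rf th y) * snd (Rf th x) + Cmod (Rf th x) * snd (Rf th y)).
Proof. rewrite !Cmod_Rf. unfold Rf; simpl. f_equal; ring. Qed.

Lemma gt_Dn_ub th x y : PI < th < 2 * PI -> sector th x -> sector th y ->
  Dn (sector th) x y <= sqrt (dst x y ^ 2 + 4 * dG (sector th) x * dG (sector th) y).
Proof.
  intros Hth Hx Hy. pose proof (sin_neg_gt th Hth) as Hs.
  pose proof (gt_d_pos th x Hth Hx) as Hdx. pose proof (gt_d_pos th y Hth Hy) as Hdy.
  set (dx := dG (sector th) x) in *. set (dy := dG (sector th) y) in *. set (t := dst x y).
  assert (Ht : 0 <= t) by apply dst_ge0.
  assert (Htt : t <= sqrt (t ^ 2 + 4 * dx * dy)) by (apply sq_le_sqrt; nra).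
  pose proof (Cmod_pos_S th x Hx) as Hnx. pose proof (Cmod_pos_S th y Hy) as Hny.
  set (nx := Cmod x) in *. set (ny := Cmod y) in *.
  set (q := (ny * fst x + nx * fst y, ny * snd x + nx * snd y)).
  destruct (classic (Av q <= 0 /\ Bv th q <= 0)) as [HK|HK].
  - (* segment meets K *)
    set (l := nx / (nx + ny)).
    assert (Hl : 0 <= l <= 1).
    { unfold l. split. apply Rdiv_le_0_compat; lra. apply Rmult_le_reg_r with (nx + ny); [lra|].
      unfold Rdiv. rewrite Rmult_assoc, Rinv_l by lra. lra. }
    assert (EA : Av (pt x y l) = Av q / (nx + ny)) by (unfold Av, pt, q, l; simpl; field; lra).
    assert (EB : Bv th (pt x y l) = Bv th q / (nx + ny)) by (unfold Bv, pt, q, l; simpl; field; lra).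
    eapply Rle_trans. apply (Dn_le _ x y (pt x y l)); auto.
    + destruct HK as [K1 K2]. apply gt_notS; auto; [rewrite EA|rewrite EB];
      apply Rmult_le_reg_r with (nx + ny); try lra; unfold Rdiv; rewrite Rmult_assoc, Rinv_l by lra; lra.
    + rewrite seg_sum; auto.
  - destruct (classic (fst q <= 0 /\ fst q * cos th + snd q * sin th <= 0)) as [HKs|HKs].
    +
      assert (Hq : 0 < Cmod q).
      { destruct (Rle_lt_dec (Cmod q) 0) as [h|h]; auto. assert (Cmod q = 0) by (pose proof (Cmod_ge_0 q); lra).
        apply Cmod_eq_0 in H. exfalso. apply HK. rewrite H. unfold Av, Bv; simpl; lra. }
      destruct HKs as [K1 K2].
      pose proof (gt_d_ge_q th q x Hth K1 K2 Hq) as Gx. pose proof (gt_d_ge_q th q y Hth K1 K2 Hq) as Gy.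
      fold dx dy in Gx, Gy.
      eapply Rle_trans. apply (Dn_le _ x y (0, 0)); auto.
      { apply gt_notS; auto; unfold Av, Bv; simpl; lra. }
      rewrite dst_0, dst_0'. fold nx ny. apply sq_le_sqrt; [lra|].
      set (xy := fst x * fst y + snd x * snd y).
      set (P0 := nx * ny + xy).
      assert (Hnx2 : nx * nx = fst x ^ 2 + snd x ^ 2) by apply Cmod_sq.
      assert (Hny2 : ny * ny = fst y ^ 2 + snd y ^ 2) by apply Cmod_sq.
      assert (Hq2 : Cmod q * Cmod q = 2 * nx * ny * P0).
      { rewrite Cmod_sq. unfold q, P0, xy; cbn [fst snd].
        transitivity (ny * ny * (fst x ^ 2 + snd x ^ 2) + nx * nx * (fst y ^ 2 + snd y ^ 2) + 2 * nx * ny * (fst x * fst y + snd x * snd y)); [ring|].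
        rewrite <- Hnx2, <- Hny2. ring. }
      assert (Eqx : fst q * fst x + snd q * snd x = nx * P0).
      { unfold q, P0, xy; cbn [fst snd]. transitivity (ny * (fst x ^ 2 + snd x ^ 2) + nx * (fst x * fst y + snd x * snd y)); [ring|]. rewrite <- Hnx2. ring. }
      assert (Eqy : fst q * fst y + snd q * snd y = ny * P0).
      { unfold q, P0, xy; cbn [fst snd]. transitivity (nx * (fst y ^ 2 + snd y ^ 2) + ny * (fst x * fst y + snd x * snd y)); [ring|]. rewrite <- Hny2. ring. }
      assert (Et : t ^ 2 = nx * nx + ny * ny - 2 * xy) by (unfold t; rewrite dst_sq, Hnx2, Hny2; unfold xy; ring).
      assert (HP0 : 0 <= P0).
      { unfold P0. apply Rnot_lt_le. intros Hc. assert (Hxy : nx * ny < - xy) by lra.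
        assert (nx * ny * (nx * ny) < xy * xy) by (apply sq_lt in Hxy; [nra|nra]).
        assert (xy * xy <= (fst x ^ 2 + snd x ^ 2) * (fst y ^ 2 + snd y ^ 2)) by (unfold xy; pose proof (cauchy2 (fst x) (snd x) (fst y) (snd y)); nra).
        nra. }
      rewrite Eqx in Gx. rewrite Eqy in Gy.
      assert (Hprod : nx * P0 * (ny * P0) <= Cmod q * dx * (Cmod q * dy)) by (apply Rmult_le_compat; nra).
      assert (Hprod2 : nx * ny * P0 * P0 <= 2 * nx * ny * P0 * (dx * dy)).
      { replace (Cmod q * dx * (Cmod q * dy)) with (Cmod q * Cmod q * (dx * dy)) in Hprod by ring.
        rewrite Hq2 in Hprod. nra. }
      assert (HP : P0 <= 2 * (dx * dy)).
      { destruct (Req_dec P0 0) as [e|e]. rewrite e. nra.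
        assert (0 < nx * ny * P0) by (apply Rmult_lt_0_compat; [nra|lra]).
        apply Rmult_le_reg_l with (nx * ny * P0); auto. nra. }
      unfold P0 in HP. nra.
    + assert (Hvn : Av q > 0 \/ Bv th q > 0).
      { destruct (Rle_lt_dec (Av q) 0); destruct (Rle_lt_dec (Bv th q) 0); auto. exfalso; apply HK; auto. }
      destruct (cover th q Hth Hvn HKs) as [[H1 H2]|[H1 H2]].
      * destruct (aside_core x y) as [w [Hw1 [Hw2 Hw3]]]; auto. unfold Av in H2; auto.
        eapply Rle_trans. apply (Dn_le _ x y w); auto.
        { apply gt_notS; auto; unfold Av, Bv; rewrite Hw1. lra. assert (0 <= fst w * (- sin th)) by (apply Rmult_le_pos; lra). lra. }
        destruct Hw3 as [E|[Hx2 [Hy2 E]]]; rewrite E; fold t; [lra|].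
        apply sqrt_le_1_alt. pose proof (gt_d_ge_A th x Hth). pose proof (gt_d_ge_A th y Hth). unfold Av in *. fold dx dy in H, H0. fold t. nra.
      * destruct (aside_core (Rf th x) (Rf th y)) as [w [Hw1 [Hw2 Hw3]]]; rewrite ?Cmod_Rf; auto.
        { unfold Rf; simpl. unfold q in H1; simpl in H1. fold nx ny. nra. }
        { unfold Rf; simpl. unfold q, Bv in H2; simpl in H2. fold nx ny. nra. }
        eapply Rle_trans. apply (Dn_le _ x y (Rf th w)); auto.
        { apply gt_notS; auto. rewrite Av_Rf. unfold Bv. rewrite Hw1. assert (0 <= fst w * (- sin th)) by (apply Rmult_le_pos; lra). lra.
          rewrite Bv_Rf. unfold Av. lra. }
        assert (E1 : dst x (Rf th w) = dst (Rf th x) w) by (pose proof (dst_Rf th (Rf th x) w) as K; rewrite Rf_invol in K; exact K).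
        assert (E2 : dst (Rf th w) y = dst w (Rf th y)) by (pose proof (dst_Rf th w (Rf th y)) as K; rewrite Rf_invol in K; exact K).
        rewrite E1, E2.
        destruct Hw3 as [E|[Hx2 [Hy2 E]]]; rewrite E; rewrite dst_Rf; fold t; [lra|].
        apply sqrt_le_1_alt. pose proof (gt_d_ge_B th x Hth). pose proof (gt_d_ge_B th y Hth).
        fold dx dy in H, H0. rewrite <- !Av_Rf in H, H0. unfold Av in H, H0. nra.
Qed.


Lemma d_pos th x : 0 < th < 2 * PI -> sector th x -> 0 < dG (sector th) x.
Proof.
  intros Hth Hx. destruct (Rle_lt_dec th PI).
  - rewrite le_d_eq; auto; [|lra]. apply sec_char_le in Hx as [H1 H2]; [|lra]. apply Rmin_pos; lra.
  - apply gt_d_pos; auto. lra.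
Qed.

Lemma Dn_le_t2d' G x y : (exists z, boundary G z) -> Dn G x y <= dst x y + 2 * dG G y.
Proof.
  intros H. assert ((Dn G x y - dst x y) / 2 <= dG G y); [|lra].
  apply dG_lb; auto. intros z Hz. destruct (Dn_props G x y H) as [_ [Hle _]].
  pose proof (Hle z Hz). pose proof (dst_tri x y z). rewrite (dst_sym z y) in *. lra.
Qed.

Lemma bd_ne_th th : 0 < th < 2 * PI -> exists z, boundary (sector th) z.
Proof. intros. apply sec_bd_ne. lra. Qed.

Lemma part1 th x y : 0 < th < 2 * PI -> sector th x -> sector th y ->
  jstar (sector th) x y <= pG (sector th) x y /\ pG (sector th) x y <= sqrt 2 * jstar (sector th) x y.
Proof.
  intros Hth Hx Hy. unfold jstar, pG. rewrite dst_fold.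
  pose proof (bd_ne_th th Hth) as Hne.
  apply ratio_jp; auto using dst_ge0, d_pos.
  - pose proof (dG_lip (sector th) y x Hne). rewrite dst_sym in H. lra.
  - pose proof (dG_lip (sector th) x y Hne). lra.
Qed.

Lemma j_le_s th x y : 0 < th < 2 * PI -> sector th x -> sector th y ->
  jstar (sector th) x y <= sG (sector th) x y.
Proof.
  intros Hth Hx Hy. unfold jstar. rewrite sG_eq, dst_fold.
  pose proof (bd_ne_th th Hth) as Hne.
  pose proof (d_pos th x Hth Hx). pose proof (d_pos th y Hth Hy).
  pose proof (Dn_ge_d (sector th) x y Hne).
  replace (dst x y / Dn (sector th) x y) with (1 * (dst x y / Dn (sector th) x y)) by ring.
  pose proof (dst_ge0 x y).
  apply div_cmp; try lra.
  - assert (0 < Rmin (dG (sector th) x) (dG (sector th) y)) by (apply Rmin_pos; lra). lra.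
  - pose proof (Dn_le_t2d _ x y Hne). pose proof (Dn_le_t2d' _ x y Hne).
    unfold Rmin. destruct (Rle_dec (dG (sector th) x) (dG (sector th) y)); lra.
Qed.

Lemma s_le_1 th x y : 0 < th < 2 * PI -> sector th x -> sector th y -> sG (sector th) x y <= 1.
Proof.
  intros Hth Hx Hy. rewrite sG_eq. pose proof (bd_ne_th th Hth) as Hne.
  pose proof (d_pos th x Hth Hx). pose proof (d_pos th y Hth Hy).
  pose proof (Dn_ge_d (sector th) x y Hne). pose proof (Dn_ge_t (sector th) x y Hne).
  apply Rmult_le_reg_r with (Dn (sector th) x y); [lra|]. unfold Rdiv. rewrite Rmult_assoc, Rinv_l by lra. lra.
Qed.

Lemma p_le_1 th x y : 0 < th < 2 * PI -> sector th x -> sector th y -> pG (sector th) x y <= 1.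
Proof.
  intros Hth Hx Hy. unfold pG. rewrite dst_fold.
  pose proof (d_pos th x Hth Hx). pose proof (d_pos th y Hth Hy). pose proof (dst_ge0 x y).
  assert (Hs : dst x y <= sqrt (dst x y ^ 2 + 4 * dG (sector th) x * dG (sector th) y)) by (apply sq_le_sqrt; nra).
  assert (0 < sqrt (dst x y ^ 2 + 4 * dG (sector th) x * dG (sector th) y)) by (apply sqrt_lt_R0; nra).
  apply Rmult_le_reg_r with (sqrt (dst x y ^ 2 + 4 * dG (sector th) x * dG (sector th) y)); auto.
  unfold Rdiv. rewrite Rmult_assoc, Rinv_l by lra. lra.
Qed.

Lemma far_config th c : 0 < th < 2 * PI -> 1 < c ->
  exists x y, sector th x /\ sector th y /\ 1 < c * jstar (sector th) x y /\ 1 < c * pG (sector th) x y.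
Proof.
  intros Hth Hc.
  set (T := 2 / (c - 1) + 1).
  assert (HT : 0 < T) by (unfold T; assert (0 < 2 / (c - 1)) by (apply Rdiv_lt_0_compat; lra); lra).
  assert (HcT : 1 < c * (T / (T + 2))).
  { assert ((c - 1) * T = 2 + (c - 1)) by (unfold T; field; lra).
    apply Rmult_lt_reg_r with (T + 2); [lra|]. unfold Rdiv. rewrite Rmult_1_l.
    replace (c * (T * / (T + 2)) * (T + 2)) with (c * T) by (field; lra). nra. }
  set (x := (1 * cos (th / 2), 1 * sin (th / 2))). set (y := ((T + 1) * cos (th / 2), (T + 1) * sin (th / 2))).
  assert (Hx : sector th x) by (exists 1, (th / 2); repeat split; lra).
  assert (Hy : sector th y) by (exists (T + 1), (th / 2); repeat split; lra).
  exists x, y. split; auto. split; auto.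
  pose proof (bd_ne_th th Hth) as Hne.
  assert (Et : dst x y = T).
  { rewrite dst_eq. unfold x, y; cbn [fst snd]. apply sqrt_sq_eq; [lra|].
    pose proof (sin2_cos2 (th / 2)). unfold Rsqr in H.
    transitivity (T ^ 2 * (sin (th / 2) * sin (th / 2) + cos (th / 2) * cos (th / 2))); [ring|]. rewrite H. ring. }
  assert (Hdx1 : dG (sector th) x <= 1).
  { eapply Rle_trans. apply (dG_le _ x (0, 0)); auto. apply origin_notS.
    rewrite dst_0. unfold Cmod, x; cbn [fst snd]. apply sqrt_le_sq; [lra|].
    pose proof (sin2_cos2 (th / 2)). unfold Rsqr in H. nra. }
  pose proof (d_pos th x Hth Hx) as Hdx. pose proof (d_pos th y Hth Hy) as Hdy.
  pose proof (dG_lip (sector th) y x Hne) as Hl. rewrite dst_sym, Et in Hl.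
  unfold jstar, pG. rewrite dst_fold, Et. split.
  - eapply Rlt_le_trans; [exact HcT|]. apply Rmult_le_compat_l; [lra|].
    replace (T / (T + 2)) with (1 * (T / (T + 2))) by ring.
    apply div_cmp'; try lra. assert (0 < Rmin (dG (sector th) x) (dG (sector th) y)) by (apply Rmin_pos; lra). lra.
    pose proof (Rmin_l (dG (sector th) x) (dG (sector th) y)). lra.
  - eapply Rlt_le_trans; [exact HcT|]. apply Rmult_le_compat_l; [lra|].
    replace (T / (T + 2)) with (1 * (T / (T + 2))) by ring.
    apply div_cmp'; try lra. apply sqrt_lt_R0; nra.
    rewrite Rmult_1_l. apply sqrt_le_sq; [lra|]. nra.
Qed.


Lemma inv_sqrt2 : / sqrt 2 = sqrt 2 / 2.
Proof. pose proof sqrt2_sq. pose proof sqrt2_pos. apply Rmult_eq_reg_l with (sqrt 2); [|lra].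
  rewrite Rinv_r by lra. replace (sqrt 2 * (sqrt 2 / 2)) with (sqrt 2 * sqrt 2 / 2) by field. rewrite H. field. Qed.

Lemma pj_vals t dx dy : 0 < t -> dx = t / 2 -> dy = t / 2 ->
  t / sqrt (t ^ 2 + 4 * dx * dy) = / sqrt 2 /\ t / (t + 2 * Rmin dx dy) = / 2.
Proof.
  intros Ht -> ->. rewrite Rmin_left by lra. split.
  - replace (t ^ 2 + 4 * (t / 2) * (t / 2)) with (t ^ 2 * 2) by field.
    rewrite sqrt_mult by nra. rewrite sqrt_pow2 by lra. pose proof sqrt2_pos. field. lra.
  - field. lra.
Qed.

Lemma sin3 a : sin (3 * a) = sin a * (4 * cos a ^ 2 - 1).
Proof.
  replace (3 * a) with (2 * a + a) by ring. rewrite sin_plus, sin_2a, cos_2a_cos. ring.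
Qed.

Lemma sym_facts th : 0 < th < 2 * PI ->
  let a := th / 4 in
  let X0 := (1 * cos a, 1 * sin a) in let Y0 := (1 * cos (3 * a), 1 * sin (3 * a)) in
  sector th X0 /\ sector th Y0 /\ Av X0 = sin a /\ Bv th X0 = sin (3 * a) /\
  Av Y0 = sin (3 * a) /\ Bv th Y0 = sin a /\ dst X0 Y0 = 2 * sin a /\ 0 < sin a /\ 0 < cos a.
Proof.
  intros Hth a X0 Y0.
  assert (Hsa : 0 < sin a) by (unfold a; apply sin_gt_0; lra).
  assert (Hca : 0 < cos a) by (unfold a; apply cos_gt_0; lra).
  split; [exists 1, a; unfold a; repeat split; lra|].
  split; [exists 1, (3 * a); unfold a; repeat split; lra|].
  split; [unfold Av, X0; simpl; ring|].
  split; [unfold X0; rewrite Bv_polar; replace (th - a) with (3 * a) by (unfold a; field); ring|].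
  split; [unfold Av, Y0; simpl; ring|].
  split; [unfold Y0; rewrite Bv_polar; replace (th - 3 * a) with a by (unfold a; field); ring|].
  split; [|auto].
  rewrite dst_eq. unfold X0, Y0; cbn [fst snd]. apply sqrt_sq_eq; [lra|].
  pose proof (sin2_cos2 a) as E1. pose proof (sin2_cos2 (3 * a)) as E2. unfold Rsqr in E1, E2.
  pose proof (cos_minus (3 * a) a) as E3. replace (3 * a - a) with (2 * a) in E3 by ring.
  pose proof (cos_2a_sin a) as E4.
  transitivity (sin a * sin a + cos a * cos a + (sin (3 * a) * sin (3 * a) + cos (3 * a) * cos (3 * a))
     - 2 * (cos (3 * a) * cos a + sin (3 * a) * sin a)); [ring|].
  rewrite E1, E2, <- E3, E4. ring.
Qed.


Lemma sym_le th : 0 < th <= PI ->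
  exists x y, sector th x /\ sector th y /\
    pG (sector th) x y = / sqrt 2 /\ jstar (sector th) x y = / 2 /\
    sG (sector th) x y <= / (2 * cos (th / 4)).
Proof.
  intros Hth. assert (Hth' : 0 < th < 2 * PI) by (pose proof PI_RGT_0; lra).
  destruct (sym_facts th Hth') as [Hx [Hy [Ax [Bx [Ay [By [Et [Hs Hc]]]]]]]].
  set (a := th / 4) in *.
  set (X0 := (1 * cos a, 1 * sin a)) in *. set (Y0 := (1 * cos (3 * a), 1 * sin (3 * a))) in *.
  assert (H3 : sin a <= sin (3 * a)).
  { rewrite sin3. assert (0 <= cos (2 * a)) by (apply cos_ge_0; unfold a; lra).
    rewrite cos_2a_cos in H. nra. }
  assert (Edx : dG (sector th) X0 = sin a) by (rewrite le_d_eq, Ax, Bx by auto; apply Rmin_left; lra).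
  assert (Edy : dG (sector th) Y0 = sin a) by (rewrite le_d_eq, Ay, By by auto; apply Rmin_right; lra).
  exists X0, Y0. split; auto. split; auto.
  destruct (pj_vals (dst X0 Y0) (dG (sector th) X0) (dG (sector th) Y0)) as [P J]; try (rewrite Et; lra).
  split; [unfold pG; rewrite dst_fold; exact P|]. split; [unfold jstar; rewrite dst_fold; exact J|].
  rewrite sG_eq, Et.
  pose proof (le_Dn_lb th X0 Y0 Hth Hx Hy) as K. rewrite Ax, Bx, Ay, By, Et in K.
  assert (E : (2 * sin a) ^ 2 + 4 * sin a * sin (3 * a) = (4 * sin a * cos a) ^ 2) by (rewrite sin3; ring).
  replace ((2 * sin a) ^ 2 + 4 * sin (3 * a) * sin a) with ((4 * sin a * cos a) ^ 2) in K by (rewrite <- E; ring).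
  rewrite E in K. rewrite Rmin_left in K by lra. rewrite sqrt_pow2 in K by nra.
  apply Rmult_le_reg_r with (Dn (sector th) X0 Y0); [nra|].
  unfold Rdiv. rewrite Rmult_assoc, Rinv_l by nra.
  apply Rle_trans with (/ (2 * cos a) * (4 * sin a * cos a)).
  - replace (/ (2 * cos a) * (4 * sin a * cos a)) with (2 * sin a) by (field; lra). lra.
  - apply Rmult_le_compat_l; [|lra]. apply Rlt_le, Rinv_0_lt_compat. lra.
Qed.

Lemma gt_d_le_Afoot th x : PI < th < 2 * PI -> sector th x -> 0 <= fst x -> dG (sector th) x <= Rabs (Av x).
Proof.
  intros Hth Hx Hf. pose proof (sin_neg_gt th Hth).
  eapply Rle_trans. apply (dG_le _ x (foot 0 1 x)); auto.
  - apply gt_notS; auto.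
    + rewrite Av_Lf, foot_L by apply unit_A. lra.
    + unfold foot, Bv, Lf; cbn [fst snd]. replace ((fst x - (0 * fst x + 1 * snd x) * 0) * sin th - (snd x - (0 * fst x + 1 * snd x) * 1) * cos th) with (fst x * sin th) by ring. nra.
  - rewrite foot_dst by apply unit_A. rewrite Av_Lf. lra.
Qed.

Lemma gt_d_le_Bfoot th x : PI < th < 2 * PI -> sector th x -> 0 <= fst x * cos th + snd x * sin th ->
  dG (sector th) x <= Rabs (Bv th x).
Proof.
  intros Hth Hx Hf. pose proof (sin_neg_gt th Hth). pose proof (sc1 th) as Hsc.
  eapply Rle_trans. apply (dG_le _ x (foot (sin th) (- cos th) x)); auto.
  - apply gt_notS; auto.
    + unfold foot, Av, Lf; cbn [fst snd].
      assert (E : snd x - (sin th * fst x + - cos th * snd x) * - cos th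
                  = sin th * (fst x * cos th + snd x * sin th) + snd x * (1 - (sin th ^ 2 + cos th ^ 2))) by ring.
      rewrite E, Hsc. nra.
    + rewrite Bv_Lf, foot_L by apply unit_B. lra.
  - rewrite foot_dst by apply unit_B. rewrite Bv_Lf. lra.
Qed.

Lemma sym_gt th : PI < th < 2 * PI ->
  exists x y, sector th x /\ sector th y /\
    pG (sector th) x y = / sqrt 2 /\ jstar (sector th) x y = / 2 /\
    sin (th / 4) <= sG (sector th) x y.
Proof.
  intros Hth. assert (Hth' : 0 < th < 2 * PI) by (pose proof PI_RGT_0; lra).
  destruct (sym_facts th Hth') as [Hx [Hy [Ax [Bx [Ay [By [Et [Hs Hc]]]]]]]].
  set (a := th / 4) in *.
  set (X0 := (1 * cos a, 1 * sin a)) in *. set (Y0 := (1 * cos (3 * a), 1 * sin (3 * a))) in *.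
  assert (Edx : dG (sector th) X0 = sin a).
  { apply Rle_antisym.
    - eapply Rle_trans. apply gt_d_le_Afoot; auto. unfold X0; simpl; lra. rewrite Ax. rewrite Rabs_right; lra.
    - rewrite <- Ax. apply gt_d_ge_A; auto. }
  assert (Edy : dG (sector th) Y0 = sin a).
  { apply Rle_antisym.
    - eapply Rle_trans. apply gt_d_le_Bfoot; auto.
      + unfold Y0; cbn [fst snd].
        replace (1 * cos (3 * a) * cos th + 1 * sin (3 * a) * sin th) with (cos (th - 3 * a)) by (rewrite cos_minus; ring).
        replace (th - 3 * a) with a by (unfold a; field). lra.
      + rewrite By. rewrite Rabs_right; lra.
    - rewrite <- By. apply gt_d_ge_B; auto. }
  exists X0, Y0. split; auto. split; auto.
  destruct (pj_vals (dst X0 Y0) (dG (sector th) X0) (dG (sector th) Y0)) as [P J]; try (rewrite Et; lra).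
  split; [unfold pG; rewrite dst_fold; exact P|]. split; [unfold jstar; rewrite dst_fold; exact J|].
  rewrite sG_eq, Et.
  assert (HD : Dn (sector th) X0 Y0 <= 2).
  { eapply Rle_trans. apply (Dn_le _ X0 Y0 (0, 0)); auto. apply origin_notS.
    rewrite dst_0, dst_0'. unfold Cmod, X0, Y0; cbn [fst snd].
    pose proof (sin2_cos2 a) as E1. pose proof (sin2_cos2 (3 * a)) as E2. unfold Rsqr in E1, E2.
    assert (K1 : (1 * cos a) ^ 2 + (1 * sin a) ^ 2 = sin a * sin a + cos a * cos a) by ring. rewrite E1 in K1. rewrite K1.
    assert (K2 : (1 * cos (3 * a)) ^ 2 + (1 * sin (3 * a)) ^ 2 = sin (3 * a) * sin (3 * a) + cos (3 * a) * cos (3 * a)) by ring.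
    rewrite E2 in K2. rewrite K2.
    rewrite sqrt_1. lra. }
  pose proof (Dn_ge_d (sector th) X0 Y0 (bd_ne_th th Hth')). rewrite Edx, Edy in H.
  apply Rmult_le_reg_r with (Dn (sector th) X0 Y0); [lra|].
  unfold Rdiv. rewrite Rmult_assoc, Rinv_l by lra. nra.
Qed.

Lemma horiz_le th : 0 < th <= PI ->
  exists x y, sector th x /\ sector th y /\
    pG (sector th) x y = / sqrt 2 /\ jstar (sector th) x y = / 2 /\
    pG (sector th) x y <= sG (sector th) x y.
Proof.
  intros Hth.
  set (h := sin (th / 2) / 2).
  assert (Hsh : 0 < sin (th / 2)) by (apply sin_gt_0; lra).
  assert (Hch : 0 <= cos (th / 2)) by (apply cos_ge_0; lra).
  assert (Hch1 : cos (th / 2) <= 1) by apply COS_bound.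
  assert (Hh : 0 < h) by (unfold h; lra).
  assert (Esin : sin th = 2 * sin (th / 2) * cos (th / 2)) by (rewrite <- sin_2a; f_equal; field).
  assert (Ecos : cos th = 2 * cos (th / 2) ^ 2 - 1) by apply cos_half.
  set (X := (1, h)). set (Y := (1 + 2 * h, h)).
  assert (BX : h <= Bv th X).
  { unfold Bv, X; cbn [fst snd]. rewrite Esin, Ecos. unfold h.
    assert (0 <= cos (th / 2) * sin (th / 2) * (2 - cos (th / 2))) by (apply Rmult_le_pos; [apply Rmult_le_pos|]; lra).
    nra. }
  assert (BY : Bv th X <= Bv th Y).
  { unfold Bv, X, Y; cbn [fst snd]. assert (0 <= sin th) by (apply sin_ge_0; lra). nra. }
  assert (AX : Av X = h) by reflexivity. assert (AY : Av Y = h) by reflexivity.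
  assert (Hx : sector th X) by (apply sec_bwd_le; auto; lra).
  assert (Hy : sector th Y) by (apply sec_bwd_le; auto; lra).
  assert (Edx : dG (sector th) X = h) by (rewrite le_d_eq by auto; rewrite AX; apply Rmin_left; lra).
  assert (Edy : dG (sector th) Y = h) by (rewrite le_d_eq by auto; rewrite AY; apply Rmin_left; lra).
  assert (Et : dst X Y = 2 * h).
  { rewrite dst_eq. unfold X, Y; cbn [fst snd]. apply sqrt_sq_eq; [lra|]. ring. }
  exists X, Y. split; auto. split; auto.
  destruct (pj_vals (dst X Y) (dG (sector th) X) (dG (sector th) Y)) as [P J]; try (rewrite Et; lra).
  split; [unfold pG; rewrite dst_fold; exact P|]. split; [unfold jstar; rewrite dst_fold; exact J|].
  unfold pG. rewrite sG_eq, dst_fold.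
  pose proof (le_Dn_ubA th X Y Hth Hx Hy) as K. rewrite AX, AY in K. rewrite Edx, Edy.
  pose proof (Dn_ge_d (sector th) X Y (bd_ne_th th ltac:(pose proof PI_RGT_0; lra))). rewrite Edx, Edy in H.
  replace (dst X Y / Dn (sector th) X Y) with (1 * (dst X Y / Dn (sector th) X Y)) by ring.
  apply div_cmp; try lra; try apply dst_ge0; try (apply sqrt_lt_R0; nra).
Qed.


Lemma gt_p_le_s th x y : PI < th < 2 * PI -> sector th x -> sector th y ->
  pG (sector th) x y <= sG (sector th) x y.
Proof.
  intros Hth Hx Hy. unfold pG. rewrite sG_eq, dst_fold.
  pose proof (gt_d_pos th x Hth Hx). pose proof (gt_d_pos th y Hth Hy).
  pose proof (gt_Dn_ub th x y Hth Hx Hy).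
  pose proof (Dn_ge_d (sector th) x y (gt_bd_ne th Hth)).
  replace (dst x y / Dn (sector th) x y) with (1 * (dst x y / Dn (sector th) x y)) by ring.
  pose proof (dst_ge0 x y).
  apply div_cmp; try lra; try (apply sqrt_lt_R0; nra).
Qed.

Theorem theorem3p11 (theta : R) (htheta : 0 < theta < 2 * PI) :
  let S := sector theta in
  (* the inequalities *)
  (forall x y : C, S x -> S y ->
     (* (1) *)
     (jstar S x y <= pG S x y /\ pG S x y <= sqrt 2 * jstar S x y) /\
     (theta <= PI ->
        (* (2) *)
        (jstar S x y <= sG S x y /\ sG S x y <= sqrt 2 * jstar S x y) /\
        (* (4) *)
        (/ (sqrt 2 * cos (theta / 4)) * pG S x y <= sG S x y /\
         sG S x y <= pG S x y)) /\
     (PI < theta ->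
        (* (3) *)
        (jstar S x y <= sG S x y /\
         sG S x y <= 2 * sin (theta / 4) * jstar S x y) /\
        (* (5) *)
        (pG S x y <= sG S x y /\
         sG S x y <= sqrt 2 * sin (theta / 4) * pG S x y))) /\
  (* sharpness of the constants *)
  (sharp_lower S 1 (jstar S) (pG S) /\ sharp_upper S (sqrt 2) (jstar S) (pG S)) /\
  (theta <= PI ->
     (sharp_lower S 1 (jstar S) (sG S) /\
      sharp_upper S (sqrt 2) (jstar S) (sG S)) /\
     (sharp_lower S (/ (sqrt 2 * cos (theta / 4))) (pG S) (sG S) /\
      sharp_upper S 1 (pG S) (sG S))) /\
  (PI < theta ->
     (sharp_lower S 1 (jstar S) (sG S) /\
      sharp_upper S (2 * sin (theta / 4)) (jstar S) (sG S)) /\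
     (sharp_lower S 1 (pG S) (sG S) /\
      sharp_upper S (sqrt 2 * sin (theta / 4)) (pG S) (sG S))).
Proof.
  intros S. unfold S. clear S.
  pose proof sqrt2_pos as Hs2. pose proof sqrt2_sq as Hs22. pose proof inv_sqrt2 as Hi2.
  split; [|split; [|split]].
  - intros x y Hx Hy.
    pose proof (part1 theta x y htheta Hx Hy) as [P1a P1b].
    split; [split; auto|split].
    + intros Hle. assert (Hth : 0 < theta <= PI) by lra.
      destruct (le_main theta x y Hth Hx Hy) as [SP PS].
      pose proof (j_le_s theta x y htheta Hx Hy).
      split; split; auto; try lra.
      assert (Hc : 0 < cos (theta / 4)) by (apply cos_gt_0; lra).
      assert (Hk : 0 < sqrt 2 * cos (theta / 4)) by (apply Rmult_lt_0_compat; lra).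
      apply Rmult_le_reg_l with (sqrt 2 * cos (theta / 4)); auto.
      rewrite <- Rmult_assoc, Rinv_r, Rmult_1_l by lra. lra.
    + intros Hgt. assert (Hth : PI < theta < 2 * PI) by lra.
      pose proof (j_le_s theta x y htheta Hx Hy).
      pose proof (gt_p_le_s theta x y Hth Hx Hy).
      pose proof (gt_s_le_p theta x y Hth Hx Hy).
      assert (Hsn : 0 < sin (theta / 4)) by (apply sin_gt_0; lra).
      split; split; auto.
      eapply Rle_trans; [exact H1|].
      assert (E : sqrt 2 * sin (theta / 4) * (sqrt 2 * jstar (sector theta) x y) = sqrt 2 * sqrt 2 * sin (theta / 4) * jstar (sector theta) x y) by ring.
      rewrite Hs22 in E. rewrite <- E.
      apply Rmult_le_compat_l; auto. apply Rmult_le_pos; lra.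
  - split.
    + intros c Hc. destruct (far_config theta c htheta Hc) as [x [y [Hx [Hy [J P]]]]].
      exists x, y. split; auto. split; auto. pose proof (p_le_1 theta x y htheta Hx Hy). lra.
    + intros c Hc. destruct (Rle_lt_dec theta PI) as [Hle|Hgt].
      * destruct (sym_le theta ltac:(lra)) as [x [y [Hx [Hy [P [J _]]]]]].
        exists x, y. split; auto. split; auto. rewrite P, J, Hi2. lra.
      * destruct (sym_gt theta ltac:(lra)) as [x [y [Hx [Hy [P [J _]]]]]].
        exists x, y. split; auto. split; auto. rewrite P, J, Hi2. lra.
  - intros Hle. assert (Hth : 0 < theta <= PI) by lra. split; split.
    + intros c Hc. destruct (far_config theta c htheta Hc) as [x [y [Hx [Hy [J P]]]]].
      exists x, y. split; auto. split; auto. pose proof (s_le_1 theta x y htheta Hx Hy). lra.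
    + intros c Hc. destruct (horiz_le theta Hth) as [x [y [Hx [Hy [P [J H]]]]]].
      exists x, y. split; auto. split; auto. rewrite J. rewrite P, Hi2 in H. lra.
    + intros c Hc. destruct (sym_le theta Hth) as [x [y [Hx [Hy [P [J H]]]]]].
      exists x, y. split; auto. split; auto.
      assert (Hco : 0 < cos (theta / 4)) by (apply cos_gt_0; lra).
      rewrite P. eapply Rle_lt_trans; [exact H|].
      assert (E : / (2 * cos (theta / 4)) = / (sqrt 2 * cos (theta / 4)) * / sqrt 2).
      { rewrite <- Rinv_mult. f_equal. replace (sqrt 2 * cos (theta / 4) * sqrt 2) with (sqrt 2 * sqrt 2 * cos (theta / 4)) by ring. rewrite Hs22. ring. }
      rewrite E. apply Rmult_lt_compat_r; auto. apply Rinv_0_lt_compat; lra.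
    + intros c Hc. destruct (horiz_le theta Hth) as [x [y [Hx [Hy [P [J H]]]]]].
      exists x, y. split; auto. split; auto. rewrite P in *. rewrite Hi2 in *. nra.
  - intros Hgt. assert (Hth : PI < theta < 2 * PI) by lra. split; split.
    + intros c Hc. destruct (far_config theta c htheta Hc) as [x [y [Hx [Hy [J P]]]]].
      exists x, y. split; auto. split; auto. pose proof (s_le_1 theta x y htheta Hx Hy). lra.
    + intros c Hc. destruct (sym_gt theta Hth) as [x [y [Hx [Hy [P [J H]]]]]].
      exists x, y. split; auto. split; auto. rewrite J. lra.
    + intros c Hc. destruct (far_config theta c htheta Hc) as [x [y [Hx [Hy [J P]]]]].
      exists x, y. split; auto. split; auto. pose proof (s_le_1 theta x y htheta Hx Hy). lra.
    + intros c Hc. destruct (sym_gt theta Hth) as [x [y [Hx [Hy [P [J H]]]]]].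
      exists x, y. split; auto. split; auto. rewrite P, Hi2.
      assert (c * sqrt 2 < 2 * sin (theta / 4)).
      { apply Rmult_lt_compat_r with (r := sqrt 2) in Hc; auto.
        replace (sqrt 2 * sin (theta / 4) * sqrt 2) with (sqrt 2 * sqrt 2 * sin (theta / 4)) in Hc by ring.
        rewrite Hs22 in Hc. lra. }
      lra.
Qed.
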